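(* Let $\mathcal K$ be a real Hilbert space, let $f\colon\mathcal K\to\,]-\infty,+\infty]$ be a proper lower semicontinuous convex function, let $\alpha,\beta\in\,]0,+\infty[$, let $B\colon\mathcal K\to\mathcal K$ be monotone and $\beta$-Lipschitzian, let $(\eta_n)_{n\in\mathbb N}$ be a summable sequence in $[0,+\infty[$, and let $(U_n)_{n\in\mathbb N}$ be a sequence in $\mathcal P_\alpha(\mathcal K)$ with $\mu=\sup_n\|U_n\|<+\infty$ and $(1+\eta_n)U_{n+1}\succcurlyeq U_n$ for all $n$. Let $x_0\in\mathcal K$, let $\varepsilon\in\,]0,\min\{1,1/(\mu\beta+1)\}[$, and let $(\gamma_n)_{n\in\mathbb N}$ be a sequence in $[\varepsilon,(1-\varepsilon)/(\beta\mu)]$. Suppose the variational inequality $$\text{find } \bar x\in\mathcal K \text{ such that } (\forall y\in\mathcal K)\ \ \langle \bar x-y, B\bar x\rangle+f(\bar x)\le f(y)$$ has at least one solution, and for every $n\in\mathbb N$ set $$y_n=x_n-\gamma_nU_nBx_n,\quad p_n=\operatorname*{argmin}_{x\in\mathcal K}\Big(f(x)+\tfrac{1}{2\gamma_n}\|x-y_n\|_{U_n^{-1}}^2\Big),\quad q_n=p_n-\gamma_nU_nBp_n,\quad x_{n+1}=x_n-y_n+q_n.$$ Then $(x_n)_{n\in\mathbb N}$ converges weakly to a solution of the variational inequality.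
   Context: $\mathcal P_\alpha(\mathcal K)=\{M\in\mathcal B(\mathcal K): M^*=M,\ \langle Mx,x\rangle\ge\alpha\|x\|^2\ \forall x\}$, where $\mathcal B(\mathcal K)$ denotes bounded linear operators on $\mathcal K$. For self-adjoint $M_1,M_2$, $M_1\succcurlyeq M_2$ means $\langle M_1x,x\rangle\ge\langle M_2x,x\rangle$ for all $x$. For $M\in\mathcal P_\alpha(\mathcal K)$, $\|x\|_M=\sqrt{\langle Mx,x\rangle}$. *)

(* Defs.v *)
From Stdlib Require Import Reals Lra ClassicalEpsilon.
Open Scope R_scope.

Record HilbertSpace := {
  hcar :> Type;
  hzero : hcar;
  hadd : hcar -> hcar -> hcar;
  hopp : hcar -> hcar;
  hscal : R -> hcar -> hcar;
  hinner : hcar -> hcar -> R;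
  hadd_assoc : forall x y z, hadd x (hadd y z) = hadd (hadd x y) z;
  hadd_comm : forall x y, hadd x y = hadd y x;
  hadd_zero : forall x, hadd x hzero = x;
  hadd_opp : forall x, hadd x (hopp x) = hzero;
  hscal_one : forall x, hscal 1 x = x;
  hscal_assoc : forall a b x, hscal a (hscal b x) = hscal (a * b) x;
  hscal_distr_v : forall a x y, hscal a (hadd x y) = hadd (hscal a x) (hscal a y);
  hscal_distr_s : forall a b x, hscal (a + b) x = hadd (hscal a x) (hscal b x);
  hinner_sym : forall x y, hinner x y = hinner y x;
  hinner_add_l : forall x y z, hinner (hadd x y) z = hinner x z + hinner y z;
  hinner_scal_l : forall a x y, hinner (hscal a x) y = a * hinner x y;
  hinner_pos : forall x, 0 <= hinner x x;
  hinner_def : forall x, hinner x x = 0 -> x = hzero;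
  hcomplete : forall u : nat -> hcar,
    (forall e, e > 0 -> exists N, forall m n, (m >= N)%nat -> (n >= N)%nat ->
        sqrt (hinner (hadd (u m) (hopp (u n))) (hadd (u m) (hopp (u n)))) < e) ->
    exists l, forall e, e > 0 -> exists N, forall n, (n >= N)%nat ->
        sqrt (hinner (hadd (u n) (hopp l)) (hadd (u n) (hopp l))) < e
}.

Section HS.
Context {K : HilbertSpace}.

Definition hsub (x y : K) : K := hadd K x (hopp K y).
Definition inner (x y : K) : R := hinner K x y.
Definition hnorm (x : K) : R := sqrt (inner x x).

Definition strong_cv (u : nat -> K) (l : K) : Prop :=
  Un_cv (fun n => hnorm (hsub (u n) l)) 0.
Definition weak_cv (u : nat -> K) (l : K) : Prop :=
  forall z : K, Un_cv (fun n => inner (u n) z) (inner l z).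

Definition is_linear (M : K -> K) : Prop :=
  forall a x y, M (hadd K (hscal K a x) y) = hadd K (hscal K a (M x)) (M y).
Definition is_bounded_linear (M : K -> K) : Prop :=
  is_linear M /\ exists c, forall x, hnorm (M x) <= c * hnorm x.
Definition self_adjoint (M : K -> K) : Prop :=
  forall x y, inner (M x) y = inner x (M y).
Definition P_alpha (alpha : R) (M : K -> K) : Prop :=
  is_bounded_linear M /\ self_adjoint M /\
  forall x, inner (M x) x >= alpha * (hnorm x) ^ 2.
Definition loewner_ge (M1 M2 : K -> K) : Prop :=
  forall x, inner (M1 x) x >= inner (M2 x) x.
Definition is_opnorm (M : K -> K) (c : R) : Prop :=
  is_lub (fun r => exists x, hnorm x <= 1 /\ r = hnorm (M x)) c.
(* inverse of an operator (the preimage chosen by epsilon; for an invertible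
   operator this is its inverse) *)
Definition inv_op (M : K -> K) (x : K) : K :=
  epsilon (inhabits (hzero K)) (fun z => M z = x).
Definition Mnorm (M : K -> K) (x : K) : R := sqrt (inner (M x) x).

Definition monotone (B : K -> K) : Prop :=
  forall x y, inner (hsub (B x) (B y)) (hsub x y) >= 0.
Definition lipschitz (beta : R) (B : K -> K) : Prop :=
  forall x y, hnorm (hsub (B x) (B y)) <= beta * hnorm (hsub x y).
End HS.

Inductive ereal := Fin (r : R) | PInf.
Definition ele (a b : ereal) : Prop :=
  match a, b with
  | Fin x, Fin y => x <= y
  | _, PInf => True
  | PInf, Fin _ => False
  end.
Definition eaddr (r : R) (a : ereal) : ereal :=
  match a with Fin x => Fin (r + x) | PInf => PInf end.
Definition econv (t : R) (a b : ereal) : ereal :=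
  match a, b with Fin x, Fin y => Fin (t * x + (1 - t) * y) | _, _ => PInf end.

Section Fun.
Context {K : HilbertSpace}.
Definition proper (f : K -> ereal) : Prop := exists x, f x <> PInf.
Definition convex (f : K -> ereal) : Prop :=
  forall x y t, 0 < t < 1 ->
    ele (f (hadd K (hscal K t x) (hscal K (1 - t) y))) (econv t (f x) (f y)).
Definition lsc (f : K -> ereal) : Prop :=
  forall (c : R) (u : nat -> K) (l : K),
    (forall n, ele (f (u n)) (Fin c)) -> strong_cv u l -> ele (f l) (Fin c).

Definition VI_solution (f : K -> ereal) (B : K -> K) (xb : K) : Prop :=
  forall y, ele (eaddr (inner (hsub xb y) (B xb)) (f xb)) (f y).
End Fun.

(* Main.v *)
Require Import Defs.
From Stdlib Require Import Reals Lra Psatz ClassicalEpsilon Classical Arith Lia.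
Open Scope R_scope.

Section Base.
Context {K : HilbertSpace}.

Lemma inner_addl (x y z : K) : inner (hadd K x y) z = inner x z + inner y z.
Proof. apply hinner_add_l. Qed.
Lemma inner_scall a (x y : K) : inner (hscal K a x) y = a * inner x y.
Proof. apply hinner_scal_l. Qed.
Lemma inner_sym (x y : K) : inner x y = inner y x.
Proof. apply hinner_sym. Qed.
Lemma inner_zerol (z : K) : inner (hzero K) z = 0.
Proof.
  assert (H := inner_addl (hzero K) (hzero K) z).
  rewrite hadd_zero in H. lra.
Qed.
Lemma inner_oppl (y z : K) : inner (hopp K y) z = - inner y z.
Proof.
  assert (H := inner_addl y (hopp K y) z).
  rewrite hadd_opp, inner_zerol in H. lra.
Qed.
Lemma inner_subl (x y z : K) : inner (hsub x y) z = inner x z - inner y z.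
Proof. unfold hsub. rewrite inner_addl, inner_oppl. ring. Qed.
Lemma inner_addr (x y z : K) : inner z (hadd K x y) = inner z x + inner z y.
Proof. rewrite !(inner_sym z). apply inner_addl. Qed.
Lemma inner_scalr a (x y : K) : inner y (hscal K a x) = a * inner y x.
Proof. rewrite !(inner_sym y). apply inner_scall. Qed.
Lemma inner_zeror (z : K) : inner z (hzero K) = 0.
Proof. rewrite inner_sym. apply inner_zerol. Qed.
Lemma inner_oppr (y z : K) : inner z (hopp K y) = - inner z y.
Proof. rewrite !(inner_sym z). apply inner_oppl. Qed.
Lemma inner_subr (x y z : K) : inner z (hsub x y) = inner z x - inner z y.
Proof. rewrite !(inner_sym z). apply inner_subl. Qed.

Lemma inner_pos (x : K) : 0 <= inner x x.
Proof. apply hinner_pos. Qed.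

Lemma vec_ext (x y : K) : (forall z, inner x z = inner y z) -> x = y.
Proof.
  intros H.
  assert (E : hsub x y = hzero K).
  { apply hinner_def. change (inner (hsub x y) (hsub x y) = 0).
    rewrite inner_subl, H. ring. }
  assert (E2 : hadd K (hsub x y) y = x).
  { unfold hsub. rewrite <- hadd_assoc, (hadd_comm K (hopp K y) y), hadd_opp, hadd_zero. reflexivity. }
  rewrite E, hadd_comm, hadd_zero in E2. auto.
Qed.

End Base.

#[export] Hint Rewrite @inner_addl @inner_scall @inner_zerol @inner_oppl @inner_subl
  @inner_addr @inner_scalr @inner_zeror @inner_oppr @inner_subr : inner.


Ltac vec_eq := apply vec_ext; intro; autorewrite with inner; ring.

Lemma quad_disc (a b c : R) : 0 <= c -> (forall t, 0 <= a + 2*b*t + c*t*t) -> b*b <= a*c.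
Proof.
  intros Hc H. destruct Hc as [Hc|Hc].
  - specialize (H (-b/c)).
    assert (E: a*c - b*b = c*(a + 2*b*(-b/c) + c*(-b/c)*(-b/c))) by (field; lra).
    nra.
  - subst c. destruct (Req_dec b 0) as [->|Hb]. nra.
    specialize (H (-(a+1)/(2*b))).
    assert (E: a + 2*b*(-(a+1)/(2*b)) + 0*(-(a+1)/(2*b))*(-(a+1)/(2*b)) = -1) by (field; auto).
    lra.
Qed.

Lemma sqle (a b : R) : 0 <= b -> a*a <= b*b -> a <= b.
Proof. intros. nra. Qed.

Section Norms.
Context {K : HilbertSpace}.

Lemma hnorm_pos (x : K) : 0 <= hnorm x.
Proof. apply sqrt_pos. Qed.
Lemma hnorm_sq (x : K) : hnorm x * hnorm x = inner x x.
Proof. apply sqrt_sqrt, inner_pos. Qed.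
Lemma hnorm_pow2 (x : K) : hnorm x ^ 2 = inner x x.
Proof. rewrite <- hnorm_sq. ring. Qed.

Lemma cs2 (x y : K) : inner x y * inner x y <= inner x x * inner y y.
Proof.
  apply quad_disc. apply inner_pos. intro t.
  assert (H := inner_pos (hadd K x (hscal K t y))).
  autorewrite with inner in H. rewrite (inner_sym y x) in H. nra.
Qed.

Lemma cs (x y : K) : Rabs (inner x y) <= hnorm x * hnorm y.
Proof.
  apply sqle. apply Rmult_le_pos; apply hnorm_pos.
  assert (E : Rabs (inner x y) * Rabs (inner x y) = inner x y * inner x y).
  { rewrite <- Rabs_mult. apply Rabs_right. nra. }
  rewrite E. replace (hnorm x * hnorm y * (hnorm x * hnorm y)) with
    ((hnorm x * hnorm x) * (hnorm y * hnorm y)) by ring.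
  rewrite !hnorm_sq. apply cs2.
Qed.

Lemma cs_le (x y : K) : inner x y <= hnorm x * hnorm y.
Proof. eapply Rle_trans; [apply Rle_abs | apply cs]. Qed.

Lemma tri (x y : K) : hnorm (hadd K x y) <= hnorm x + hnorm y.
Proof.
  apply sqle. assert (H1 := hnorm_pos x). assert (H2 := hnorm_pos y). lra.
  rewrite hnorm_sq. autorewrite with inner. rewrite (inner_sym y x).
  assert (H := cs_le x y). rewrite <- (hnorm_sq x), <- (hnorm_sq y). nra.
Qed.

Lemma tri_sub (x y z : K) : hnorm (hsub x z) <= hnorm (hsub x y) + hnorm (hsub y z).
Proof.
  replace (hsub x z) with (hadd K (hsub x y) (hsub y z)) by vec_eq. apply tri.
Qed.

Lemma hnorm_scal a (x : K) : hnorm (hscal K a x) = Rabs a * hnorm x.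
Proof.
  apply Rle_antisym; apply sqle; try (apply Rmult_le_pos; [apply Rabs_pos| apply hnorm_pos]);
  try apply hnorm_pos;
  replace (Rabs a * hnorm x * (Rabs a * hnorm x)) with ((Rabs a * Rabs a) * (hnorm x * hnorm x)) by ring;
  rewrite <- Rabs_mult, Rabs_right by nra; rewrite !hnorm_sq; autorewrite with inner; lra.
Qed.

Lemma hnorm_sub_sym (x y : K) : hnorm (hsub x y) = hnorm (hsub y x).
Proof.
  replace (hsub x y) with (hscal K (-1) (hsub y x)) by vec_eq.
  rewrite hnorm_scal. rewrite Rabs_left by lra. ring.
Qed.

Lemma inner_zero_eq (x : K) : inner x x = 0 -> x = hzero K.
Proof. apply hinner_def. Qed.

Lemma hnorm_zero_eq (x : K) : hnorm x = 0 -> x = hzero K.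
Proof. intros H. apply inner_zero_eq. rewrite <- hnorm_sq, H. ring. Qed.

Lemma hnorm_zero : hnorm (hzero K) = 0.
Proof. unfold hnorm. rewrite inner_zerol. apply sqrt_0. Qed.

Lemma sub_zero_eq (x y : K) : hsub x y = hzero K -> x = y.
Proof. intros H. apply vec_ext. intro z. assert (E := f_equal (fun v => inner v z) H).
  simpl in E. autorewrite with inner in E. lra. Qed.

Lemma cs_abs_le (x y : K) c : hnorm y <= c -> Rabs (inner x y) <= hnorm x * c.
Proof. intros. eapply Rle_trans. apply cs. apply Rmult_le_compat_l. apply hnorm_pos. auto. Qed.

End Norms.

Section Lin.
Context {K : HilbertSpace}.
Context (M : K -> K).
Context (HM : is_linear M).

Lemma lin_zero : M (hzero K) = hzero K.
Proof.
  assert (H := HM 1 (hzero K) (hzero K)).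
  replace (hadd K (hscal K 1 (hzero K)) (hzero K)) with (hzero K) in H by vec_eq.
  apply vec_ext. intro z. assert (E := f_equal (fun v => inner v z) H). simpl in E.
  autorewrite with inner in E |- *. lra.
Qed.
Lemma lin_add x y : M (hadd K x y) = hadd K (M x) (M y).
Proof. assert (H := HM 1 x y). rewrite !hscal_one in H. auto. Qed.
Lemma lin_scal a x : M (hscal K a x) = hscal K a (M x).
Proof. assert (H := HM a x (hzero K)). rewrite !hadd_zero, lin_zero, hadd_zero in H. auto. Qed.
Lemma lin_opp x : M (hopp K x) = hopp K (M x).
Proof. replace (hopp K x) with (hscal K (-1) x) by vec_eq. rewrite lin_scal. vec_eq. Qed.
Lemma lin_sub x y : M (hsub x y) = hsub (M x) (M y).
Proof. unfold hsub. rewrite lin_add, lin_opp. auto. Qed.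
End Lin.

Lemma gen_cs {K : HilbertSpace} (A : K -> K) : is_linear A -> self_adjoint A ->
  (forall x, 0 <= inner (A x) x) ->
  forall x y, inner (A x) y * inner (A x) y <= inner (A x) x * inner (A y) y.
Proof.
  intros HL HS HP x y. apply quad_disc. apply HP. intro t.
  assert (H := HP (hadd K x (hscal K t y))).
  rewrite lin_add, lin_scal in H by auto. autorewrite with inner in H.
  rewrite (HS y x), (inner_sym y (A x)) in H. nra.
Qed.

Lemma Rabs_le_inv x a : Rabs x <= a -> -a <= x <= a.
Proof. intros H. assert (H1 := Rle_abs x). assert (H2 := Rle_abs (-x)). rewrite Rabs_Ropp in H2. lra. Qed.

Lemma choice_nat {T : Type} (P : nat -> T -> Prop) :
  (forall n, exists x, P n x) -> exists f : nat -> T, forall n, P n (f n).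
Proof.
  intros H. exists (fun n => proj1_sig (constructive_indefinite_description _ (H n))).
  intro n. exact (proj2_sig (constructive_indefinite_description _ (H n))).
Qed.

Lemma cv_unique (u : nat -> R) l1 l2 : Un_cv u l1 -> Un_cv u l2 -> l1 = l2.
Proof. apply UL_sequence. Qed.

Lemma cv_le (a b : nat -> R) la lb : (forall n, a n <= b n) -> Un_cv a la -> Un_cv b lb -> la <= lb.
Proof. apply Rle_cv_lim. Qed.

Lemma cv_const c : Un_cv (fun _ => c) c.
Proof. intros e He. exists 0%nat. intros. unfold R_dist. rewrite Rminus_diag, Rabs_R0. lra. Qed.

Lemma cv_le_const (a : nat -> R) la b : (forall n, a n <= b) -> Un_cv a la -> la <= b.
Proof. intros. eapply cv_le with (b := fun _ => b); eauto. apply cv_const. Qed.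

Lemma cv_ge_const (a : nat -> R) la b : (forall n, b <= a n) -> Un_cv a la -> b <= la.
Proof. intros. eapply cv_le with (a := fun _ => b); eauto. apply cv_const. Qed.

Lemma cv_sub (ρ : nat -> nat) (a : nat -> R) l : (forall k, (k <= ρ k)%nat) -> Un_cv a l ->
  Un_cv (fun k => a (ρ k)) l.
Proof. intros Hr H e He. destruct (H e He) as [N HN]. exists N. intros n Hn. apply HN.
  specialize (Hr n). lia. Qed.

Lemma cv_ext (a b : nat -> R) l : (forall n, a n = b n) -> Un_cv a l -> Un_cv b l.
Proof. intros E H e He. destruct (H e He) as [N HN]. exists N. intros. rewrite <- E. auto. Qed.

Lemma cv_zero_iff (a : nat -> R) l : Un_cv (fun n => a n - l) 0 -> Un_cv a l.
Proof. intros H e He. destruct (H e He) as [N HN]. exists N. intros n Hn. specialize (HN n Hn).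
  unfold R_dist in *. rewrite Rminus_0_r in HN. auto. Qed.

Lemma cv_to_zero (a : nat -> R) l : Un_cv a l -> Un_cv (fun n => a n - l) 0.
Proof. intros H e He. destruct (H e He) as [N HN]. exists N. intros n Hn. specialize (HN n Hn).
  unfold R_dist in *. rewrite Rminus_0_r. auto. Qed.

Lemma squeeze0 (c d : nat -> R) : (forall n, Rabs (c n) <= d n) -> Un_cv d 0 -> Un_cv c 0.
Proof. intros H Hd e He. destruct (Hd e He) as [N HN]. exists N. intros n Hn.
  specialize (HN n Hn). specialize (H n). unfold R_dist in *. rewrite Rminus_0_r in *.
  assert (0 <= d n) by (eapply Rle_trans; [apply Rabs_pos| eauto]).
  rewrite Rabs_right in HN by lra. lra. Qed.

Lemma cv_plus' (a b : nat -> R) la lb : Un_cv a la -> Un_cv b lb -> Un_cv (fun n => a n + b n) (la + lb).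
Proof. apply CV_plus. Qed.
Lemma cv_minus' (a b : nat -> R) la lb : Un_cv a la -> Un_cv b lb -> Un_cv (fun n => a n - b n) (la - lb).
Proof. apply CV_minus. Qed.
Lemma cv_mult' (a b : nat -> R) la lb : Un_cv a la -> Un_cv b lb -> Un_cv (fun n => a n * b n) (la * lb).
Proof. apply CV_mult. Qed.

Lemma cv_bounded_zero (a b : nat -> R) C : (forall n, Rabs (a n) <= C) -> Un_cv b 0 ->
  Un_cv (fun n => a n * b n) 0.
Proof.
  intros Ha Hb. apply squeeze0 with (d := fun n => C * Rabs (b n)).
  - intro n. rewrite Rabs_mult. apply Rmult_le_compat_r. apply Rabs_pos. auto.
  - replace 0 with (C * 0) by ring. apply (CV_mult (fun _ => C)). apply cv_const.
    intros e He. destruct (Hb e He) as [N HN]. exists N. intros n Hn. specialize (HN n Hn).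
    unfold R_dist in *. rewrite Rminus_0_r in *. rewrite Rabs_Rabsolu. auto.
Qed.

Lemma inv_small (e : R) : 0 < e -> exists N, forall n, (n >= N)%nat -> / (INR n + 1) < e.
Proof.
  intros He. destruct (archimed_cor1 e He) as [N [HN HN0]]. exists N. intros n Hn.
  eapply Rle_lt_trans; [|apply HN]. apply Rinv_le_contravar. apply lt_0_INR. lia.
  apply le_INR in Hn. lra.
Qed.

Lemma cv_inv : Un_cv (fun n => / (INR n + 1)) 0.
Proof.
  intros e He. destruct (inv_small e He) as [N HN]. exists N. intros n Hn.
  unfold R_dist. rewrite Rminus_0_r. rewrite Rabs_right. auto.
  left. apply Rinv_0_lt_compat. assert (H:= pos_INR n). lra.
Qed.

Lemma le_small (a c : R) : (forall t, 0 < t < 1 -> a <= t * c) -> a <= 0.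
Proof.
  intros H. destruct (Rle_dec a 0) as [|Ha]. auto. exfalso.
  destruct (Rle_dec c 0) as [Hc|Hc].
  - specialize (H (1/2) ltac:(lra)). lra.
  - set (t := Rmin (1/2) (a / (2*c))).
    assert (Ht1 : t <= a / (2*c)) by apply Rmin_r.
    assert (Ht0 : 0 < t). { unfold t. apply Rmin_glb_lt. lra. apply Rdiv_lt_0_compat; lra. }
    assert (Ht2 : t <= 1/2) by apply Rmin_l.
    specialize (H t ltac:(lra)).
    assert (t * c <= a / 2). { apply Rmult_le_compat_r with (r := c) in Ht1; [|lra].
      replace (a / (2*c) * c) with (a/2) in Ht1 by (field; lra). lra. }
    lra.
Qed.

Section Strong.
Context {K : HilbertSpace}.

Lemma strong_cv_iff (u : nat -> K) l :
  strong_cv u l <-> forall e, e > 0 -> exists N, forall n, (n >= N)%nat -> hnorm (hsub (u n) l) < e.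
Proof.
  unfold strong_cv, Un_cv, R_dist. split; intros H e He; destruct (H e He) as [N HN]; exists N;
  intros n Hn; specialize (HN n Hn); rewrite Rminus_0_r in *; rewrite Rabs_right in * by (apply Rle_ge, hnorm_pos); auto.
Qed.

Lemma strong_cv_norm (u : nat -> K) l : strong_cv u l -> Un_cv (fun n => hnorm (hsub (u n) l)) 0.
Proof. auto. Qed.

Lemma strong_weak (u : nat -> K) l : strong_cv u l -> weak_cv u l.
Proof.
  intros H z. apply cv_zero_iff.
  apply squeeze0 with (d := fun n => hnorm (hsub (u n) l) * hnorm z).
  - intro n. rewrite <- inner_subl. rewrite (inner_sym). rewrite Rmult_comm. apply cs.
  - replace 0 with (0 * hnorm z) by ring. apply (CV_mult _ (fun _ => hnorm z)). apply H. apply cv_const.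
Qed.

Lemma weak_unique (u : nat -> K) l1 l2 : weak_cv u l1 -> weak_cv u l2 -> l1 = l2.
Proof. intros H1 H2. apply vec_ext. intro z. eapply cv_unique; eauto. Qed.

Lemma strong_unique (u : nat -> K) l1 l2 : strong_cv u l1 -> strong_cv u l2 -> l1 = l2.
Proof. intros. eapply weak_unique; apply strong_weak; eauto. Qed.

Lemma weak_sub (ρ : nat -> nat) (u : nat -> K) l : (forall k, (k <= ρ k)%nat) -> weak_cv u l ->
  weak_cv (fun k => u (ρ k)) l.
Proof. intros Hr H z. apply (cv_sub ρ (fun n => inner (u n) z)); auto. Qed.

Lemma weak_pert (u v : nat -> K) l : weak_cv u l -> Un_cv (fun n => hnorm (v n)) 0 ->
  weak_cv (fun n => hadd K (u n) (v n)) l.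
Proof.
  intros Hu Hv z. replace (inner l z) with (inner l z + 0) by ring.
  apply (cv_ext (fun n => inner (u n) z + inner (v n) z)). intro. autorewrite with inner. auto.
  apply CV_plus. apply Hu. apply squeeze0 with (d := fun n => hnorm (v n) * hnorm z).
  intro. apply cs. replace 0 with (0 * hnorm z) by ring. apply (CV_mult _ (fun _ => hnorm z)). auto. apply cv_const.
Qed.

Lemma cs_inner_bound (u : nat -> K) C z : (forall n, hnorm (u n) <= C) ->
  forall n, Rabs (inner (u n) z) <= C * hnorm z.
Proof. intros H n. eapply Rle_trans. apply cs. apply Rmult_le_compat_r. apply hnorm_pos. auto. Qed.

End Strong.

Section Proj.
Context {K : HilbertSpace}.

Definition hconvex_set (C : K -> Prop) := forall a b t, 0 <= t <= 1 -> C a -> C b ->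
  C (hadd K (hscal K t a) (hscal K (1 - t) b)).
Definition hclosed_set (C : K -> Prop) := forall u l, (forall n : nat, C (u n)) -> strong_cv u l -> C l.

Lemma sq_lt_sqrt (a e : R) : 0 <= a -> 0 < e -> a < e * e -> sqrt a < e.
Proof. intros Ha He H. rewrite <- (sqrt_square e) by lra. apply sqrt_lt_1; nra. Qed.

Lemma inner_cv_sq (u : nat -> K) l x : strong_cv u l ->
  Un_cv (fun n => inner (hsub x (u n)) (hsub x (u n))) (inner (hsub x l) (hsub x l)).
Proof.
  intros H. apply cv_zero_iff.
  (* <x-u,x-u> - <x-l,x-l> = <l-u, (x-u)+(x-l)> *)
  apply (cv_ext (fun n => inner (hsub l (u n)) (hadd K (hsub x (u n)) (hsub x l)))).
  { intro n. autorewrite with inner. rewrite (inner_sym (u n) x), (inner_sym (u n) l), (inner_sym l x). ring. }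
  apply squeeze0 with (d := fun n => hnorm (hsub (u n) l) * (hnorm (hsub (u n) l) + 2 * hnorm (hsub x l))).
  - intro n. eapply Rle_trans. apply cs. rewrite hnorm_sub_sym. apply Rmult_le_compat_l. apply hnorm_pos.
    replace (hadd K (hsub x (u n)) (hsub x l)) with (hadd K (hsub l (u n)) (hscal K 2 (hsub x l))) by vec_eq.
    eapply Rle_trans. apply tri. rewrite hnorm_scal, hnorm_sub_sym, Rabs_right by lra. lra.
  - replace 0 with (0 * (0 + 2 * hnorm (hsub x l))) by ring. apply CV_mult. apply H.
    apply CV_plus. apply H. apply cv_const.
Qed.

Theorem projection (C : K -> Prop) (x0 : K) : C x0 -> hconvex_set C -> hclosed_set C ->
  forall x, exists p, C p /\ forall w, C w -> inner (hsub x p) (hsub w p) <= 0.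
Proof.
  intros H0 Hcv Hcl x.
  set (E := fun r => exists w, C w /\ r = - inner (hsub x w) (hsub x w)).
  destruct (completeness E) as [m [Hub Hlub]].
  { exists 0. intros r [w [_ ->]]. assert (H := inner_pos (hsub x w)). lra. }
  { exists (- inner (hsub x x0) (hsub x x0)). exists x0. auto. }
  set (d2 := - m).
  assert (Hinf : forall w, C w -> d2 <= inner (hsub x w) (hsub x w)).
  { intros w Hw. assert (H := Hub _ (ex_intro _ w (conj Hw eq_refl))). unfold d2. lra. }
  assert (Happ : forall n : nat, exists w, C w /\ inner (hsub x w) (hsub x w) < d2 + / (INR n + 1)).
  { intro n. apply NNPP. intro Hn.
    assert (Hpos : 0 < / (INR n + 1)). { apply Rinv_0_lt_compat. assert (H:=pos_INR n). lra. }
    assert (Hb : is_upper_bound E (m - / (INR n + 1))).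
    { intros r [w [Hw ->]]. apply Rnot_lt_le. intro Hlt. apply Hn. exists w. split. auto. unfold d2. lra. }
    specialize (Hlub _ Hb). lra. }
  destruct (choice_nat _ Happ) as [w Hw].
  assert (Hcauchy : forall n k, inner (hsub (w n) (w k)) (hsub (w n) (w k)) <=
                                 2 * / (INR n + 1) + 2 * / (INR k + 1)).
  { intros n k. destruct (Hw n) as [Cn Hn]. destruct (Hw k) as [Ck Hk].
    set (mid := hadd K (hscal K (1/2) (w n)) (hscal K (1 - 1/2) (w k))).
    assert (Hm : C mid) by (apply Hcv; auto; lra).
    assert (Hd := Hinf _ Hm).
    assert (E1 : inner (hsub (w n) (w k)) (hsub (w n) (w k)) =
       2 * inner (hsub x (w n)) (hsub x (w n)) + 2 * inner (hsub x (w k)) (hsub x (w k))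
       - 4 * inner (hsub x mid) (hsub x mid)).
    { unfold mid. autorewrite with inner.
      rewrite (inner_sym (w k) (w n)), (inner_sym (w n) x), (inner_sym (w k) x). field. }
    lra. }
  destruct (hcomplete K w) as [l Hl].
  { intros e He. destruct (inv_small (e * e / 4)) as [N HN]. apply Rdiv_lt_0_compat; nra.
    exists N. intros n k Hn Hk. change (hnorm (hsub (w n) (w k)) < e).
    apply sq_lt_sqrt. apply inner_pos. auto.
    assert (H1 := HN n Hn). assert (H2 := HN k Hk).
    assert (Hnk := Hcauchy n k). lra. }
  assert (Hsl : strong_cv w l).
  { apply strong_cv_iff. intros e He. destruct (Hl e He) as [N HN]. exists N. intros. apply HN; auto. }
  assert (Cl : C l) by (eapply Hcl; [intro n; apply (Hw n) | exact Hsl]).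
  assert (Hd : inner (hsub x l) (hsub x l) <= d2).
  { eapply cv_le with (a := fun n => inner (hsub x (w n)) (hsub x (w n))) (b := fun n => d2 + / (INR n + 1)).
    intro n. left. apply (Hw n). apply inner_cv_sq. auto.
    assert (Hb : Un_cv (fun n => d2 + / (INR n+1)) (d2+0)) by (apply CV_plus; [apply cv_const|apply cv_inv]).
    rewrite Rplus_0_r in Hb. exact Hb. }
  exists l. split. auto. intros z Hz.
  apply le_small with (c := inner (hsub z l) (hsub z l) / 2). intros t Ht.
  assert (Hzt : C (hadd K (hscal K t z) (hscal K (1 - t) l))) by (apply Hcv; auto; lra).
  assert (H1 := Hinf _ Hzt).
  assert (E1 : inner (hsub x (hadd K (hscal K t z) (hscal K (1 - t) l))) (hsub x (hadd K (hscal K t z) (hscal K (1 - t) l)))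
     = inner (hsub x l) (hsub x l) - 2 * t * inner (hsub x l) (hsub z l) + t * t * inner (hsub z l) (hsub z l)).
  { autorewrite with inner. rewrite (inner_sym z x), (inner_sym l x), (inner_sym l z). ring. }
  rewrite E1 in H1. nra.
Qed.
End Proj.

Section ProjCor.
Context {K : HilbertSpace}.

Definition subspace (C : K -> Prop) := C (hzero K) /\ (forall a b, C a -> C b -> C (hadd K a b)) /\
  (forall t a, C a -> C (hscal K t a)).

Lemma subspace_convex C : subspace C -> hconvex_set C.
Proof. intros [H0 [Ha Hs]] a b t Ht Ca Cb. apply Ha; apply Hs; auto. Qed.

Lemma proj_subspace (C : K -> Prop) : subspace C -> hclosed_set C ->
  forall x, exists p, C p /\ forall w, C w -> inner (hsub x p) w = 0.
Proof.
  intros HS Hcl x. destruct (projection C (hzero K) (proj1 HS) (subspace_convex C HS) Hcl x) as [p [Cp Hp]].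
  exists p. split. auto. intros w Cw. destruct HS as [H0 [Ha Hs]].
  assert (H1 := Hp (hadd K p w) (Ha _ _ Cp Cw)).
  assert (H2 := Hp (hadd K p (hscal K (-1) w)) (Ha _ _ Cp (Hs _ _ Cw))).
  replace (hsub (hadd K p w) p) with w in H1 by vec_eq.
  replace (hsub (hadd K p (hscal K (-1) w)) p) with (hscal K (-1) w) in H2 by vec_eq.
  rewrite inner_scalr in H2. lra.
Qed.

Lemma weak_closed (C : K -> Prop) (x0 : K) : C x0 -> hconvex_set C -> hclosed_set C ->
  forall u l, (forall n : nat, C (u n)) -> weak_cv u l -> C l.
Proof.
  intros H0 Hcv Hcl u l Hu Hw.
  destruct (projection C x0 H0 Hcv Hcl l) as [p [Cp Hp]].
  assert (Hle : inner (hsub l p) (hsub l p) <= 0).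
  { apply cv_le_const with (a := fun n => inner (u n) (hsub l p) - inner p (hsub l p)).
    intro n. rewrite <- inner_subl, inner_sym. apply Hp. auto.
    rewrite inner_subl. apply CV_minus. apply Hw. apply cv_const. }
  assert (E : hsub l p = hzero K) by (apply inner_zero_eq; assert (H:=inner_pos (hsub l p)); lra).
  apply sub_zero_eq in E. subst. auto.
Qed.

Lemma riesz (L : K -> R) c : (forall a x y, L (hadd K (hscal K a x) y) = a * L x + L y) ->
  (forall x, Rabs (L x) <= c * hnorm x) -> exists v, forall z, L z = inner v z.
Proof.
  intros HL Hb.
  assert (L0 : L (hzero K) = 0).
  { assert (H := HL 1 (hzero K) (hzero K)). replace (hadd K (hscal K 1 (hzero K)) (hzero K)) with (hzero K) in H by vec_eq. lra. }
  assert (Ladd : forall x y, L (hadd K x y) = L x + L y).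
  { intros. rewrite <- (hscal_one K x) at 1. rewrite HL. ring. }
  assert (Lscal : forall a x, L (hscal K a x) = a * L x).
  { intros. rewrite <- (hadd_zero K (hscal K a x)). rewrite HL, L0. ring. }
  destruct (classic (forall z, L z = 0)) as [Hz|Hnz].
  { exists (hzero K). intro z. rewrite Hz, inner_zerol. auto. }
  apply not_all_ex_not in Hnz. destruct Hnz as [z0 Hz0].
  set (N := fun z => L z = 0).
  assert (HS : subspace N).
  { unfold N. split. auto. split. intros a b Ha Hb'. rewrite Ladd, Ha, Hb'. ring.
    intros t a Ha. rewrite Lscal, Ha. ring. }
  assert (Lsub : forall x y, L (hsub x y) = L x - L y).
  { intros. replace (hsub x y) with (hadd K (hscal K (-1) y) x) by vec_eq. rewrite HL. ring. }
  assert (Hcl : hclosed_set N).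
  { intros u l Hu Hl. unfold N in *.
    assert (Hle : Rabs (L l) <= c * 0).
    { apply cv_ge_const with (a := fun n => c * hnorm (hsub (u n) l)).
      intro n. replace (L l) with (- L (hsub (u n) l)) by (rewrite Lsub, Hu; ring).
      rewrite Rabs_Ropp. apply Hb. apply (CV_mult (fun _ => c)). apply cv_const. apply Hl. }
    assert (H1 := Rle_abs (L l)). assert (H2 := Rle_abs (- L l)). rewrite Rabs_Ropp in H2. lra. }
  destruct (proj_subspace N HS Hcl z0) as [p [Np Hp]].
  set (w := hsub z0 p).
  assert (Lw : L w <> 0). { unfold w. rewrite Lsub. unfold N in Np. rewrite Np. lra. }
  assert (ww : inner w w <> 0).
  { intro E. apply inner_zero_eq in E. rewrite E in Lw. auto. }
  exists (hscal K (L w / inner w w) w). intro z.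
  assert (Nz : N (hsub z (hscal K (L z / L w) w))).
  { unfold N. rewrite Lsub, Lscal. field. auto. }
  assert (H := Hp _ Nz). fold w in H. autorewrite with inner in H |- *.
  replace (inner w z) with (L z / L w * inner w w) by lra. field. auto.
Qed.
End ProjCor.

Lemma bw_real (a : nat -> R) C : (forall n, Rabs (a n) <= C) ->
  exists ψ l, (forall k, (k <= ψ k)%nat) /\ Un_cv (fun k => a (ψ k)) l.
Proof.
  intros H. destruct (Bolzano_Weierstrass a (fun c => -C <= c <= C) (compact_P3 (-C) C)) as [l Hl].
  { intro n. specialize (H n). split. assert (H1 := Rle_abs (- a n)). rewrite Rabs_Ropp in H1. lra.
    assert (H1 := Rle_abs (a n)). lra. }
  assert (Hex : forall k : nat, exists p, (k <= p)%nat /\ Rabs (a p - l) < / (INR k + 1)).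
  { intro k. assert (Hpos : 0 < / (INR k + 1)) by (apply Rinv_0_lt_compat; assert (H1:=pos_INR k); lra).
    destruct (Hl (disc l (mkposreal _ Hpos)) k) as [p [Hp Hv]].
    { exists (mkposreal _ Hpos). intros y Hy. auto. }
    exists p. split; auto. }
  destruct (choice_nat _ Hex) as [ψ Hψ]. exists ψ, l. split. intro k. apply (Hψ k).
  intros e He. destruct (inv_small e He) as [N HN]. exists N. intros n Hn. unfold R_dist.
  eapply Rlt_trans. apply (Hψ n). apply HN; auto.
Qed.

Lemma cv_eventually (a b : nat -> R) N l : (forall n, (n >= N)%nat -> a n = b n) -> Un_cv a l -> Un_cv b l.
Proof. intros E H e He. destruct (H e He) as [M HM]. exists (max N M). intros n Hn.
  rewrite <- E by lia. apply HM. lia. Qed.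

Section Compact.
Context {K : HilbertSpace}.

Definition ext_spec (a : nat -> R) (ψ : nat -> nat) : Prop :=
  (forall k, (k <= ψ k)%nat) /\ ((exists C, forall n, Rabs (a n) <= C) -> exists l, Un_cv (fun k => a (ψ k)) l).

Definition ext (a : nat -> R) : nat -> nat := epsilon (inhabits (fun k : nat => k)) (ext_spec a).

Lemma ext_ok a : ext_spec a (ext a).
Proof.
  unfold ext. apply epsilon_spec.
  destruct (classic (exists C, forall n, Rabs (a n) <= C)) as [[C HC]|Hn].
  - destruct (bw_real a C HC) as [ψ [l [H1 H2]]]. exists ψ. split; auto. intros _. eauto.
  - exists (fun k => k). split. auto. intros H. contradiction.
Qed.

Context (u : nat -> K) (C : R) (Hu : forall n, hnorm (u n) <= C).

Fixpoint Psi (m : nat) : nat -> nat :=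
  match m with
  | O => ext (fun k => inner (u k) (u O))
  | S m' => fun j => Psi m' (ext (fun k => inner (u (Psi m' k)) (u (S m'))) j)
  end.

Lemma Psi_ge m j : (j <= Psi m j)%nat.
Proof.
  revert j; induction m; intro j; simpl.
  - apply (proj1 (ext_ok _)).
  - eapply Nat.le_trans; [apply (proj1 (ext_ok (fun k => inner (u (Psi m k)) (u (S m)))))| apply IHm].
Qed.

Lemma bnd_inner (f : nat -> nat) z : exists C', forall n, Rabs (inner (u (f n)) z) <= C'.
Proof. exists (C * hnorm z). intro n. eapply Rle_trans. apply cs. apply Rmult_le_compat_r. apply hnorm_pos. auto. Qed.

Lemma Psi_cv m : exists l, Un_cv (fun k => inner (u (Psi m k)) (u m)) l.
Proof.
  destruct m; simpl.
  - apply (proj2 (ext_ok (fun k => inner (u k) (u O)))). apply (bnd_inner (fun k => k)).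
  - apply (proj2 (ext_ok (fun k => inner (u (Psi m k)) (u (S m))))). apply bnd_inner.
Qed.

Lemma Psi_nest m d j : exists j', (j <= j')%nat /\ Psi (m + d) j = Psi m j'.
Proof.
  revert j; induction d; intro j.
  - exists j. rewrite Nat.add_0_r. auto.
  - rewrite Nat.add_succ_r. simpl. destruct (IHd (ext (fun k => inner (u (Psi (m + d) k)) (u (S (m + d)))) j)) as [j' [H1 H2]].
    exists j'. split. eapply Nat.le_trans; [apply (proj1 (ext_ok (fun k => inner (u (Psi (m + d) k)) (u (S (m + d))))))|exact H1]. auto.
Qed.

Definition phi (k : nat) := Psi k k.

Lemma phi_cv_um m : exists l, Un_cv (fun k => inner (u (phi k)) (u m)) l.
Proof.
  assert (Hθ : forall k, exists j, (k <= j)%nat /\ ((m <= k)%nat -> phi k = Psi m j)).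
  { intro k. destruct (le_lt_dec m k) as [Hmk|Hmk].
    - destruct (Psi_nest m (k - m) k) as [j [H1 H2]]. exists j. split; auto. intros _.
      unfold phi. replace k with (m + (k - m))%nat at 1 by lia. auto.
    - exists k. split. auto. intros. lia. }
  destruct (choice_nat _ Hθ) as [θ Hθ'].
  destruct (Psi_cv m) as [l Hl]. exists l.
  apply cv_eventually with (a := fun k => inner (u (Psi m (θ k))) (u m)) (N := m).
  - intros n Hn. rewrite (proj2 (Hθ' n)); auto.
  - apply (cv_sub θ (fun j => inner (u (Psi m j)) (u m))). intro k. apply (Hθ' k). auto.
Qed.

Lemma phi_ge k : (k <= phi k)%nat.
Proof. apply Psi_ge. Qed.

Definition Dset (z : K) := exists l, Un_cv (fun k => inner (u (phi k)) z) l.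

Lemma C_nonneg : 0 <= C.
Proof. eapply Rle_trans. apply (hnorm_pos (u 0%nat)). apply (Hu 0%nat). Qed.

Lemma Dset_all z : Dset z.
Proof.
  assert (HS : subspace Dset).
  { split; [|split].
    - exists 0. apply (cv_ext (fun _ => 0)). intro. rewrite inner_zeror. auto. apply cv_const.
    - intros a b [la Ha] [lb Hb]. exists (la + lb). apply (cv_ext (fun k => inner (u (phi k)) a + inner (u (phi k)) b)).
      intro. rewrite inner_addr. auto. apply CV_plus; auto.
    - intros t a [la Ha]. exists (t * la). apply (cv_ext (fun k => t * inner (u (phi k)) a)).
      intro. rewrite inner_scalr. auto. apply (CV_mult (fun _ => t)). apply cv_const. auto. }
  assert (Hcl : hclosed_set Dset).
  { intros w z' Hw Hz. destruct (R_complete (fun k => inner (u (phi k)) z')) as [l Hl].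
    2:{ exists l. auto. }
    intros e He. rewrite strong_cv_iff in Hz.
    destruct (Hz (e / (4 * (C + 1)))) as [J HJ].
    { apply Rdiv_lt_0_compat. lra. assert (H := C_nonneg). lra. }
    destruct (Hw J) as [lJ HlJ]. destruct (CV_Cauchy _ (exist _ lJ HlJ) (e/2)) as [N HN]. lra.
    exists N. intros n m Hn Hm. specialize (HN n m Hn Hm). unfold R_dist in *.
    assert (HJJ := HJ J (le_n J)).
    assert (B1 : Rabs (inner (u (phi n)) (hsub z' (w J))) <= C * (e / (4 * (C + 1)))).
    { eapply Rle_trans. apply cs. assert (H := hnorm_pos (u (phi n))). rewrite hnorm_sub_sym.
      apply Rmult_le_compat; auto. apply hnorm_pos. lra. }
    assert (B2 : Rabs (inner (u (phi m)) (hsub z' (w J))) <= C * (e / (4 * (C + 1)))).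
    { eapply Rle_trans. apply cs. assert (H := hnorm_pos (u (phi m))). rewrite hnorm_sub_sym.
      apply Rmult_le_compat; auto. apply hnorm_pos. lra. }
    assert (B3 : C * (e / (4 * (C + 1))) <= e / 4).
    { assert (H := C_nonneg). unfold Rdiv. rewrite Rinv_mult.
      assert (0 < / (C + 1)) by (apply Rinv_0_lt_compat; lra).
      assert (C * / (C+1) <= 1). { apply (Rmult_le_reg_r (C+1)). lra. field_simplify; lra. }
      nra. }
    rewrite !inner_subr in B1, B2.
    replace (inner (u (phi n)) z' - inner (u (phi m)) z') with
      ((inner (u (phi n)) z' - inner (u (phi n)) (w J)) - (inner (u (phi m)) z' - inner (u (phi m)) (w J))
       + (inner (u (phi n)) (w J) - inner (u (phi m)) (w J))) by ring.
    eapply Rle_lt_trans. apply Rabs_triang. eapply Rle_lt_trans. apply Rplus_le_compat_r. apply Rabs_triang.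
    rewrite Rabs_Ropp. lra. }
  assert (Hum : forall m, Dset (u m)) by (intro m; apply phi_cv_um).
  destruct (proj_subspace Dset HS Hcl z) as [p [[lp Hp] Horth]].
  exists lp. apply (cv_ext (fun k => inner (u (phi k)) p)). 2: auto.
  intro k. replace z with (hadd K p (hsub z p)) by vec_eq. rewrite inner_addr.
  rewrite (inner_sym _ (hsub z p)), Horth by auto. ring.
Qed.

Theorem weak_compact : exists ρ l, (forall k, (k <= ρ k)%nat) /\ weak_cv (fun k => u (ρ k)) l.
Proof.
  set (L := fun z => epsilon (inhabits 0) (fun l => Un_cv (fun k => inner (u (phi k)) z) l)).
  assert (HL : forall z, Un_cv (fun k => inner (u (phi k)) z) (L z)).
  { intro z. unfold L. apply epsilon_spec. apply Dset_all. }
  destruct (riesz L C) as [v Hv].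
  - intros a x y. eapply cv_unique. apply HL.
    apply (cv_ext (fun k => a * inner (u (phi k)) x + inner (u (phi k)) y)).
    intro. autorewrite with inner. auto. apply CV_plus. apply (CV_mult (fun _ => a)). apply cv_const. auto. auto.
  - intro x. apply Rabs_le. split.
    + apply cv_ge_const with (a := fun k => inner (u (phi k)) x). 2: apply HL.
      intro n. assert (H := cs_inner_bound u C x Hu (phi n)). apply Rabs_le_inv in H. lra.
    + apply cv_le_const with (a := fun k => inner (u (phi k)) x). 2: apply HL.
      intro n. assert (H := cs_inner_bound u C x Hu (phi n)). apply Rabs_le_inv in H. lra.
  - exists phi, v. split. apply phi_ge. intro z. rewrite <- Hv. apply HL.
Qed.
End Compact.

Section Op.
Context {K : HilbertSpace}.
Context (U : K -> K) (alpha mu : R) (Hlin : is_linear U) (Hsa : self_adjoint U)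
  (Hco : forall x, inner (U x) x >= alpha * hnorm x ^ 2) (Hbd : forall x, hnorm (U x) <= mu * hnorm x)
  (Ha : 0 < alpha) (Hmu : 0 < mu).

Lemma co_sub x y : alpha * inner (hsub x y) (hsub x y) <= inner (hsub (U x) (U y)) (hsub x y).
Proof. rewrite <- (lin_sub U Hlin). rewrite <- hnorm_pow2. apply Rge_le, Hco. Qed.

Lemma U_inj x y : U x = U y -> x = y.
Proof.
  intros E. apply sub_zero_eq. apply inner_zero_eq. assert (H := co_sub x y).
  rewrite E in H. replace (hsub (U y) (U y)) with (hzero K) in H by vec_eq. rewrite inner_zerol in H.
  assert (H2 := inner_pos (hsub x y)). nra.
Qed.

Lemma U_pos x : 0 <= inner (U x) x.
Proof. assert (H := Hco x). assert (0 <= hnorm x ^ 2) by (apply pow2_ge_0). nra. Qed.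

Lemma U_le x : inner (U x) x <= mu * inner x x.
Proof. eapply Rle_trans. apply cs_le. rewrite <- hnorm_sq. assert (H := Hbd x).
  assert (H1 := hnorm_pos x). nra. Qed.

Lemma U_sub_bound x y : hnorm (hsub (U x) (U y)) <= mu * hnorm (hsub x y).
Proof. rewrite <- (lin_sub U Hlin). apply Hbd. Qed.

Lemma U_surj y : exists x, U x = y.
Proof.
  set (Rg := fun v => exists x, U x = v).
  assert (HS : subspace Rg).
  { split; [|split].
    - exists (hzero K). apply lin_zero; auto.
    - intros a b [xa <-] [xb <-]. exists (hadd K xa xb). apply lin_add; auto.
    - intros t a [xa <-]. exists (hscal K t xa). apply lin_scal; auto. }
  assert (Hcl : hclosed_set Rg).
  { intros v l Hv Hl. destruct (choice_nat _ Hv) as [x Hx].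
    assert (Hxc : forall n m, alpha * hnorm (hsub (x n) (x m)) <= hnorm (hsub (v n) (v m))).
    { intros n m. assert (H := co_sub (x n) (x m)). rewrite !Hx in H.
      assert (H2 := cs_le (hsub (v n) (v m)) (hsub (x n) (x m))).
      rewrite <- (hnorm_sq (hsub (x n) (x m))) in H.
      assert (H3 := hnorm_pos (hsub (x n) (x m))). destruct H3 as [H3|H3].
      - apply (Rmult_le_reg_r (hnorm (hsub (x n) (x m)))); auto. nra.
      - rewrite <- H3. rewrite Rmult_0_r. apply hnorm_pos. }
    destruct (hcomplete K x) as [xl Hxl].
    { intros e He. rewrite strong_cv_iff in Hl. destruct (Hl (alpha * e / 2)) as [N HN].
      { apply Rdiv_lt_0_compat; nra. }
      exists N. intros n m Hn Hm. change (hnorm (hsub (x n) (x m)) < e).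
      assert (H1 := HN n Hn). assert (H2 := HN m Hm). rewrite hnorm_sub_sym in H2.
      assert (H3 := tri_sub (v n) l (v m)). assert (H4 := Hxc n m).
      apply (Rmult_lt_reg_l alpha); auto. lra. }
    exists xl. eapply strong_unique. 2: exact Hl.
    apply strong_cv_iff. intros e He. destruct (Hxl (e / mu)) as [N HN]. apply Rdiv_lt_0_compat; lra.
    exists N. intros n Hn. rewrite <- Hx. eapply Rle_lt_trans. apply U_sub_bound.
    specialize (HN n Hn). change (hnorm (hsub (x n) xl) < e / mu) in HN.
    apply (Rmult_lt_compat_l mu) in HN; auto. replace (mu * (e / mu)) with e in HN by (field; lra). lra. }
  destruct (proj_subspace Rg HS Hcl y) as [p [[xp Hp] Horth]].
  assert (H := Horth (U (hsub y p)) (ex_intro _ _ eq_refl)).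
  rewrite inner_sym in H. assert (H2 := Hco (hsub y p)). rewrite hnorm_pow2 in H2.
  assert (H3 : inner (hsub y p) (hsub y p) = 0) by (assert (H4 := inner_pos (hsub y p)); nra).
  apply inner_zero_eq, sub_zero_eq in H3. exists xp. congruence.
Qed.

Definition W := inv_op U.

Lemma UW y : U (W y) = y.
Proof. unfold W, inv_op. apply epsilon_spec. apply U_surj. Qed.

Lemma WU x : W (U x) = x.
Proof. apply U_inj. apply UW. Qed.

Lemma W_lin : is_linear W.
Proof. intros a x y. apply U_inj. rewrite UW. rewrite (Hlin a), !UW. auto. Qed.

Lemma W_sa : self_adjoint W.
Proof. intros x y. rewrite <- (UW y) at 1. rewrite <- Hsa. rewrite UW. auto. Qed.

Lemma W_pos x : 0 <= inner (W x) x.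
Proof. rewrite <- (UW x) at 2. rewrite inner_sym. apply U_pos. Qed.

Lemma W_lower x : inner x x <= mu * inner (W x) x.
Proof.
  set (v := W x). assert (E : x = U v) by (unfold v; rewrite UW; auto).
  rewrite E. rewrite (inner_sym v (U v)).
  assert (H := gen_cs U Hlin Hsa U_pos v (U v)).
  assert (H2 := U_le (U v)).
  assert (H3 := U_pos v).
  assert (H4 := inner_pos (U v)).
  destruct H4 as [H4|H4].
  - apply (Rmult_le_reg_r (inner (U v) (U v))); auto. nra.
  - rewrite <- H4. nra.
Qed.

Lemma W_norm x : alpha * hnorm (W x) <= hnorm x.
Proof.
  assert (H := Hco (W x)). rewrite UW in H. assert (H2 := cs_le x (W x)).
  assert (H3 := hnorm_pos (W x)). destruct H3 as [H3|H3].
  - apply (Rmult_le_reg_r (hnorm (W x))); auto. nra.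
  - rewrite <- H3. rewrite Rmult_0_r. apply hnorm_pos.
Qed.

Lemma W_upper x : alpha * inner (W x) x <= inner x x.
Proof.
  assert (H := Hco (W x)). rewrite UW in H. rewrite hnorm_pow2 in H. rewrite inner_sym in H.
  assert (H2 := cs_le (W x) x). assert (H3 := W_norm x).
  assert (H4 := hnorm_pos (W x)). assert (H5 := hnorm_pos x).
  rewrite <- (hnorm_sq x). rewrite <- (hnorm_sq (W x)) in H. nra.
Qed.

End Op.

Lemma loewner_inv {K : HilbertSpace} (U1 U2 : K -> K) alpha mu c :
  is_linear U1 -> self_adjoint U1 -> (forall x, inner (U1 x) x >= alpha * hnorm x ^ 2) ->
  (forall x, hnorm (U1 x) <= mu * hnorm x) ->
  is_linear U2 -> self_adjoint U2 -> (forall x, inner (U2 x) x >= alpha * hnorm x ^ 2) ->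
  (forall x, hnorm (U2 x) <= mu * hnorm x) -> 0 < alpha -> 0 < mu -> 0 < c ->
  (forall z, inner (hscal K c (U2 z)) z >= inner (U1 z) z) ->
  forall x, inner (W U2 x) x <= c * inner (W U1 x) x.
Proof.
  intros L1 S1 C1 B1 L2 S2 C2 B2 Ha Hm Hc Hlw x.
  set (a := W U2 x). assert (Ea : U2 a = x) by (apply UW with (alpha := alpha) (mu := mu); auto).
  assert (H1 : inner (U1 a) a <= c * inner x a).
  { assert (H := Hlw a). rewrite inner_scall, Ea in H. lra. }
  assert (H2 := gen_cs U1 L1 S1 (U_pos U1 alpha C1 Ha) (W U1 x) a).
  rewrite (UW U1 alpha mu L1 C1 B1 Ha Hm) in H2.
  assert (H3 := W_pos U1 alpha mu L1 C1 B1 Ha Hm x).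
  assert (H4 := U_pos U1 alpha C1 Ha a).
  rewrite (inner_sym x (W U1 x)) in H2.
  rewrite inner_sym. destruct (Rle_dec (inner x a) 0) as [Hle|Hgt]. nra.
  apply (Rmult_le_reg_r (inner x a)). lra. nra.
Qed.

Section Main.
Context (K : HilbertSpace) (f : K -> ereal) (alpha beta : R) (B : K -> K)
  (eta : nat -> R) (U : nat -> K -> K) (mu : R) (eps : R)
  (gamma : nat -> R) (x y p q : nat -> K).
Context (Hprop : proper f) (Hlsc : lsc f) (Hconv : convex f)
  (Ha : 0 < alpha) (Hb : 0 < beta) (Hmon : monotone B) (Hlip : lipschitz beta B)
  (Heta : forall n, 0 <= eta n) (Hsum : exists l, infinite_sum eta l)
  (HU : forall n, P_alpha alpha (U n))
  (Hmu : is_lub (fun r => exists n, is_opnorm (U n) r) mu)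
  (Hlw : forall n, loewner_ge (fun z => hscal K (1 + eta n) (U (S n) z)) (U n))
  (Heps : 0 < eps < Rmin 1 (1 / (mu * beta + 1)))
  (Hgam : forall n, eps <= gamma n <= (1 - eps) / (beta * mu))
  (Hsol : exists xb, VI_solution f B xb)
  (Hy : forall n, y n = hsub (x n) (hscal K (gamma n) (U n (B (x n)))))
  (Hp : forall n, forall z : K,
      ele (eaddr (1 / (2 * gamma n) * (Mnorm (inv_op (U n)) (hsub (p n) (y n))) ^ 2) (f (p n)))
          (eaddr (1 / (2 * gamma n) * (Mnorm (inv_op (U n)) (hsub z (y n))) ^ 2) (f z)))
  (Hq : forall n, q n = hsub (p n) (hscal K (gamma n) (U n (B (p n)))))
  (Hx : forall n, x (S n) = hadd K (hsub (x n) (y n)) (q n)).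

Lemma U_lin n : is_linear (U n).
Proof. apply (HU n). Qed.
Lemma U_sa n : self_adjoint (U n).
Proof. apply (HU n). Qed.
Lemma U_co n : forall z, inner (U n z) z >= alpha * hnorm z ^ 2.
Proof. apply (HU n). Qed.

Lemma opnorm_exists n : exists c, is_opnorm (U n) c.
Proof.
  destruct (HU n) as [[_ [c Hc]] _].
  destruct (completeness (fun r => exists z, hnorm z <= 1 /\ r = hnorm (U n z))) as [m Hm].
  { exists (Rabs c). intros r [z [Hz ->]]. assert (Hcz := Hc z). assert (Hn := hnorm_pos z).
    assert (Hca := Rle_abs c). assert (Hca2 := Rabs_pos c). nra. }
  { exists (hnorm (U n (hzero K))). exists (hzero K). split; auto. rewrite hnorm_zero. lra. }
  exists m. auto.
Qed.

Lemma mu_ge_opnorm n c : is_opnorm (U n) c -> c <= mu.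
Proof. intros H. apply (proj1 Hmu). exists n. auto. Qed.

Lemma mu_nonneg : 0 <= mu.
Proof.
  destruct (opnorm_exists 0) as [c Hc]. apply Rle_trans with c; [|eapply mu_ge_opnorm; eauto].
  apply (proj1 Hc). exists (hzero K). split. rewrite hnorm_zero. lra.
  rewrite (lin_zero _ (U_lin 0)), hnorm_zero. auto.
Qed.

Lemma mu_pos : 0 < mu.
Proof.
  destruct mu_nonneg as [H|H]. auto. exfalso. specialize (Hgam 0%nat). rewrite <- H in Hgam.
  rewrite Rmult_0_r in Hgam. unfold Rdiv in Hgam. rewrite Rinv_0, Rmult_0_r in Hgam. lra.
Qed.

Lemma U_bd n z : hnorm (U n z) <= mu * hnorm z.
Proof.
  destruct (opnorm_exists n) as [c Hc]. assert (Hcm := mu_ge_opnorm n c Hc).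
  destruct (hnorm_pos z) as [Hz|Hz].
  - set (z' := hscal K (/ hnorm z) z).
    assert (Hz' : hnorm z' = 1).
    { unfold z'. rewrite hnorm_scal, Rabs_right. field. lra. left. apply Rinv_0_lt_compat. auto. }
    assert (H := proj1 Hc (hnorm (U n z')) (ex_intro _ z' (conj (Req_le _ _ Hz') eq_refl))).
    unfold z' in H. rewrite (lin_scal _ (U_lin n)), hnorm_scal, Rabs_right in H.
    2:{ left. apply Rinv_0_lt_compat. auto. }
    apply (Rmult_le_compat_l (hnorm z)) in H; [|lra].
    replace (hnorm z * (/ hnorm z * hnorm (U n z))) with (hnorm (U n z)) in H by (field; lra). nra.
  - rewrite <- Hz. symmetry in Hz. apply hnorm_zero_eq in Hz. subst z. rewrite (lin_zero _ (U_lin n)), hnorm_zero. lra.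
Qed.

Definition Wn n := W (U n).

Lemma UWn n z : U n (Wn n z) = z.
Proof. apply (UW _ alpha mu (U_lin n) (U_co n) (U_bd n) Ha mu_pos). Qed.
Lemma WUn n z : Wn n (U n z) = z.
Proof. apply (WU _ alpha mu (U_lin n) (U_co n) (U_bd n) Ha mu_pos). Qed.
Lemma Wn_lin n : is_linear (Wn n).
Proof. apply (W_lin _ alpha mu (U_lin n) (U_co n) (U_bd n) Ha mu_pos). Qed.
Lemma Wn_sa n : self_adjoint (Wn n).
Proof. apply (W_sa _ alpha mu (U_lin n) (U_sa n) (U_co n) (U_bd n) Ha mu_pos). Qed.
Lemma Wn_pos n z : 0 <= inner (Wn n z) z.
Proof. apply (W_pos _ alpha mu (U_lin n) (U_co n) (U_bd n) Ha mu_pos). Qed.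
Lemma Wn_lower n z : inner z z <= mu * inner (Wn n z) z.
Proof. apply (W_lower _ alpha mu (U_lin n) (U_sa n) (U_co n) (U_bd n) Ha mu_pos). Qed.
Lemma Wn_norm n z : alpha * hnorm (Wn n z) <= hnorm z.
Proof. apply (W_norm _ alpha mu (U_lin n) (U_co n) (U_bd n) Ha mu_pos). Qed.
Lemma Wn_upper n z : alpha * inner (Wn n z) z <= inner z z.
Proof. apply (W_upper _ alpha mu (U_lin n) (U_co n) (U_bd n) Ha mu_pos). Qed.
Lemma Wn_loewner n z : inner (Wn (S n) z) z <= (1 + eta n) * inner (Wn n z) z.
Proof.
  apply (loewner_inv (U n) (U (S n)) alpha mu (1 + eta n) (U_lin n) (U_sa n) (U_co n) (U_bd n)
    (U_lin (S n)) (U_sa (S n)) (U_co (S n)) (U_bd (S n)) Ha mu_pos).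
  specialize (Heta n). lra. apply Hlw.
Qed.

Lemma eps_lt1 : eps < 1.
Proof. destruct Heps as [_ H]. assert (H1 := Rmin_l 1 (1 / (mu * beta + 1))). lra. Qed.

Lemma gam_pos n : 0 < gamma n.
Proof. specialize (Hgam n). lra. Qed.

Lemma gam_bm n : gamma n * beta * mu <= 1 - eps.
Proof.
  destruct (Hgam n) as [_ H]. assert (Hbm : 0 < beta * mu) by (apply Rmult_lt_0_compat; [lra|apply mu_pos]).
  apply (Rmult_le_compat_r (beta * mu)) in H; [|lra].
  replace ((1 - eps) / (beta * mu) * (beta * mu)) with (1 - eps) in H. rewrite Rmult_assoc. lra. assert (Hm := mu_pos). field. split; apply Rgt_not_eq; lra.
Qed.

Lemma Mnorm_sq n v : Mnorm (inv_op (U n)) v ^ 2 = inner (Wn n v) v.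
Proof. unfold Mnorm. rewrite pow2_sqrt. auto. apply Wn_pos. Qed.

Lemma fp_fin n : exists fp, f (p n) = Fin fp.
Proof.
  destruct Hprop as [z0 Hz0]. specialize (Hp n z0). destruct (f z0) as [r|] eqn:E; [|congruence].
  destruct (f (p n)) as [fp|]. eauto. simpl in Hp. contradiction.
Qed.

Lemma p_ineq n fp : f (p n) = Fin fp -> forall z fz, f z = Fin fz ->
  fp + / gamma n * inner (Wn n (hsub (y n) (p n))) (hsub z (p n)) <= fz.
Proof.
  intros Hfp z fz Hfz. assert (Hg : 0 < gamma n) by apply gam_pos. remember (gamma n) as g eqn:Eg.
  assert (HL := Wn_lin n). assert (HS := Wn_sa n). remember (Wn n) as Wm eqn:EW.
  set (a := hsub (p n) (y n)). set (b := hsub z (p n)).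
  cut (- (fz - fp - / g * inner (Wm (hsub (y n) (p n))) b) <= 0). lra.
  apply le_small with (c := / (2 * g) * inner (Wm b) b). intros t Ht.
  set (zt := hadd K (hscal K t z) (hscal K (1 - t) (p n))).
  assert (Hc := Hconv z (p n) t Ht). rewrite Hfz, Hfp in Hc. fold zt in Hc. simpl in Hc.
  destruct (f zt) as [fzt|] eqn:Ezt; [|contradiction]. simpl in Hc.
  assert (H := Hp n zt). rewrite Hfp, Ezt in H. rewrite !Mnorm_sq in H. cbn [eaddr ele] in H. rewrite <- Eg, <- EW in H.
  assert (E1 : hsub zt (y n) = hadd K a (hscal K t b)) by (unfold zt, a, b; vec_eq).
  rewrite E1 in H. rewrite (lin_add _ HL), (lin_scal _ HL) in H. fold a in H.
  autorewrite with inner in H.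
  assert (E2 : inner (Wm b) a = inner (Wm a) b) by (rewrite HS, inner_sym; auto).
  assert (E3 : hsub (y n) (p n) = hscal K (-1) a) by (unfold a; vec_eq).
  rewrite E3, (lin_scal _ HL), inner_scall. rewrite E2 in H.
  assert (H4 : 0 <= t * (fz - fp) + / g * t * inner (Wm a) b + / (2*g) * (t * t) * inner (Wm b) b).
  { replace (1 / (2 * g)) with (/ (2*g)) in H by (field; lra).
    assert (Hfin : / (2 * g) * (inner (Wm a) a + t * inner (Wm a) b + (t * inner (Wm b) a + t * (t * inner (Wm b) b))) =
       / (2*g) * inner (Wm a) a + / g * t * inner (Wm a) b + / (2*g) * (t*t) * inner (Wm b) b).
    { rewrite E2. field. lra. }
    nra. }
  assert (H5 : 0 <= (fz - fp) + / g * inner (Wm a) b + t * (/ (2*g) * inner (Wm b) b)).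
  { apply (Rmult_le_reg_l t). lra. nra. }
  lra.
Qed.


Lemma sol_fin z : VI_solution f B z -> exists fz, f z = Fin fz.
Proof.
  intros Hz. destruct (fp_fin 0) as [fp Hfp]. specialize (Hz (p 0%nat)). rewrite Hfp in Hz.
  destruct (f z) as [fz|]. eauto. simpl in Hz. contradiction.
Qed.

Lemma tseng n z : VI_solution f B z ->
  inner (Wn n (hsub (x (S n)) z)) (hsub (x (S n)) z) <=
  inner (Wn n (hsub (x n) z)) (hsub (x n) z) - eps / mu * inner (hsub (x n) (p n)) (hsub (x n) (p n)).
Proof.
  intros Hz. destruct (fp_fin n) as [fp Hfp]. destruct (sol_fin z Hz) as [fz Hfz].
  assert (Hg : 0 < gamma n) by apply gam_pos. assert (Hgbm := gam_bm n).
  assert (Hm := mu_pos). assert (He1 := eps_lt1). assert (He0 : 0 < eps) by lra.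
  assert (HL := Wn_lin n). assert (HS := Wn_sa n). assert (HUL := U_lin n).
  set (g := gamma n) in *. set (Wm := Wn n) in *.
  set (P := hsub (p n) z). set (D := hsub (x n) (p n)). set (V := hsub (B (x n)) (B (p n))).
  assert (Hpi := p_ineq n fp Hfp z fz Hfz). fold g Wm in Hpi.
  assert (Hvi := Hz (p n)). rewrite Hfp, Hfz in Hvi. simpl in Hvi.
  assert (Hmo := Hmon z (p n)).
  assert (Eyp : hsub (y n) (p n) = hsub D (hscal K g (U n (B (x n))))) by (rewrite Hy; unfold D, g; vec_eq).
  rewrite Eyp, (lin_sub _ HL), (lin_scal _ HL) in Hpi. unfold Wm in Hpi. rewrite WUn in Hpi. fold Wm in Hpi.
  assert (Ezp : hsub z (p n) = hscal K (-1) P) by (unfold P; vec_eq).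
  rewrite Ezp in Hpi. autorewrite with inner in Hpi.
  rewrite Ezp in Hvi, Hmo. autorewrite with inner in Hvi, Hmo.
  assert (Hstar : - inner (Wm D) P <= - g * inner V P).
  { unfold V. autorewrite with inner.
    rewrite (inner_sym P (B z)) in Hvi.
    apply (Rmult_le_compat_l g) in Hpi; [|lra].
    replace (g * (fp + / g * (-1 * (inner (Wm D) P - g * inner (B (x n)) P)))) with
      (g * fp - (inner (Wm D) P - g * inner (B (x n)) P)) in Hpi by (field; lra).
    assert (H2 : g * fz <= g * (fp + inner (B (p n)) P)) by (apply Rmult_le_compat_l; lra).
    lra. }
  assert (Ex1 : hsub (x (S n)) z = hadd K P (hscal K g (U n V))).
  { unfold V. rewrite (lin_sub _ HUL). rewrite Hx, Hy, Hq. unfold P, g. vec_eq. }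
  assert (Ex0 : hsub (x n) z = hadd K P D) by (unfold P, D; vec_eq).
  rewrite Ex1, Ex0. rewrite !(lin_add _ HL), (lin_scal _ HL). unfold Wm at 2. rewrite WUn. fold Wm.
  autorewrite with inner.
  rewrite (HS P (U n V)), (HS P D). unfold Wm at 2. rewrite WUn. fold Wm. rewrite (inner_sym P V), (inner_sym P (Wm D)).
  assert (HVE : inner V (U n V) <= mu * inner V V).
  { rewrite inner_sym. eapply U_le. apply U_bd. }
  assert (HVD : inner V V <= beta * beta * inner D D).
  { unfold V, D. rewrite <- !hnorm_sq. assert (H := Hlip (x n) (p n)).
    assert (H1 := hnorm_pos (hsub (B (x n)) (B (p n)))). nra. }
  assert (HWD : inner D D <= mu * inner (Wm D) D) by apply Wn_lower.
  assert (HDD := inner_pos D). assert (HVV := inner_pos V).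
  assert (Hgbm0 : 0 <= g * beta * mu) by (apply Rmult_le_pos; [|lra]; apply Rmult_le_pos; lra).
  assert (Hsq : (g * beta * mu) * (g * beta * mu) <= 1 - eps) by nra.
  assert (HWVE : g * g * inner V (U n V) <= (1 - eps) / mu * inner D D).
  { apply Rle_trans with (g * g * (mu * (beta * beta * inner D D))).
    apply Rmult_le_compat_l. nra. nra.
    replace (g * g * (mu * (beta * beta * inner D D))) with (((g * beta * mu) * (g * beta * mu)) / mu * inner D D) by (field; lra).
    apply Rmult_le_compat_r. auto. unfold Rdiv. apply Rmult_le_compat_r. left. apply Rinv_0_lt_compat. auto. auto. }
  assert (HWD' : inner D D / mu <= inner (Wm D) D).
  { apply (Rmult_le_reg_l mu). auto. replace (mu * (inner D D / mu)) with (inner D D) by (field; lra). auto. }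
  assert (Ee : (1 - eps) / mu * inner D D = inner D D / mu - eps / mu * inner D D) by (field; lra).
  nra.
Qed.

Fixpoint pi_ (n : nat) : R := match n with O => 1 | S m => pi_ m * (1 + eta m) end.
Fixpoint Sp (n : nat) : R := match n with O => 0 | S m => Sp m + eta m end.

Lemma Sp_sum n : Sp (S n) = sum_f_R0 eta n.
Proof. induction n. simpl. ring. change (Sp (S (S n))) with (Sp (S n) + eta (S n)). rewrite IHn. simpl. ring. Qed.

Definition Lsum := epsilon (inhabits 0) (fun l => infinite_sum eta l).
Lemma Lsum_spec : infinite_sum eta Lsum.
Proof. unfold Lsum. apply epsilon_spec. auto. Qed.

Lemma sum_mono n m : (n <= m)%nat -> sum_f_R0 eta n <= sum_f_R0 eta m.
Proof. induction 1. lra. simpl. specialize (Heta (S m)). lra. Qed.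

Lemma sum_le n : sum_f_R0 eta n <= Lsum.
Proof.
  apply Rnot_lt_le. intro Hlt. destruct (Lsum_spec (sum_f_R0 eta n - Lsum)) as [N HN]. lra.
  specialize (HN (max N n) ltac:(lia)). unfold R_dist in HN.
  assert (H := sum_mono n (max N n) ltac:(lia)).
  rewrite Rabs_right in HN by lra. lra.
Qed.

Lemma Sp_le n : Sp n <= Lsum.
Proof. destruct n. simpl. eapply Rle_trans; [|apply (sum_le 0)]. simpl. apply Heta. rewrite Sp_sum. apply sum_le. Qed.

Definition PP := exp Lsum.

Lemma pi_ge1 n : 1 <= pi_ n.
Proof. induction n. simpl; lra. simpl. specialize (Heta n). nra. Qed.

Lemma pi_le n : pi_ n <= PP.
Proof.
  assert (H : pi_ n <= exp (Sp n)).
  { induction n. simpl. rewrite exp_0. lra. simpl. rewrite exp_plus.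
    assert (H1 := exp_ineq1_le (eta n)). assert (H2 := pi_ge1 n). specialize (Heta n).
    apply Rmult_le_compat; lra. }
  eapply Rle_trans. apply H. unfold PP. destruct (Sp_le n) as [H1|H1].
  left. apply exp_increasing. auto. rewrite H1. lra.
Qed.

Lemma PP_pos : 0 < PP.
Proof. apply exp_pos. Qed.

Definition an (z : K) (n : nat) : R := inner (Wn n (hsub (x n) z)) (hsub (x n) z) / pi_ n.

Lemma an_nonneg z n : 0 <= an z n.
Proof. unfold an. apply Rmult_le_pos. apply Wn_pos. left. apply Rinv_0_lt_compat. assert (H := pi_ge1 n). lra. Qed.

Lemma fejer n z : VI_solution f B z ->
  an z (S n) <= an z n - eps / (mu * PP) * inner (hsub (x n) (p n)) (hsub (x n) (p n)).
Proof.
  intros Hz. unfold an. assert (H1 := tseng n z Hz). assert (H2 := Wn_loewner n (hsub (x (S n)) z)).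
  assert (Hpi := pi_ge1 n). assert (HP := pi_le n). assert (He := Heta n). assert (Hm := mu_pos).
  assert (HDD := inner_pos (hsub (x n) (p n))). assert (Hep : 0 < eps) by lra.
  change (pi_ (S n)) with (pi_ n * (1 + eta n)).
  set (A := inner (Wn (S n) (hsub (x (S n)) z)) (hsub (x (S n)) z)) in *.
  set (A0 := inner (Wn n (hsub (x (S n)) z)) (hsub (x (S n)) z)) in *.
  set (A1 := inner (Wn n (hsub (x n) z)) (hsub (x n) z)) in *.
  set (D2 := inner (hsub (x n) (p n)) (hsub (x n) (p n))) in *.
  assert (E1 : A / (pi_ n * (1 + eta n)) <= A0 / pi_ n).
  { assert (E0 : A / (1 + eta n) <= A0).
    { apply (Rmult_le_reg_r (1+eta n)). lra. replace (A / (1+eta n) * (1+eta n)) with A by (field; lra). nra. }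
    replace (A / (pi_ n * (1 + eta n))) with ((A / (1 + eta n)) / pi_ n) by (field; lra).
    unfold Rdiv at 1 3. apply Rmult_le_compat_r. left. apply Rinv_0_lt_compat. lra. auto. }
  assert (E2 : A0 / pi_ n <= A1 / pi_ n - eps / mu * D2 / pi_ n).
  { unfold Rdiv. assert (0 < / pi_ n) by (apply Rinv_0_lt_compat; lra). nra. }
  assert (E3 : eps / (mu * PP) * D2 <= eps / mu * D2 / pi_ n).
  { unfold Rdiv. rewrite Rinv_mult. assert (0 < / mu) by (apply Rinv_0_lt_compat; lra).
    assert (/ PP <= / pi_ n) by (apply Rinv_le_contravar; lra).
    assert (0 <= eps * / mu * D2) by (apply Rmult_le_pos; [apply Rmult_le_pos|]; lra).
    nra. }
  lra.
Qed.
Lemma an_decr z : VI_solution f B z -> forall n, an z (S n) <= an z n.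
Proof.
  intros Hz n. assert (H := fejer n z Hz). assert (H2 := inner_pos (hsub (x n) (p n))).
  assert (0 <= eps / (mu * PP)). { assert (Hm := mu_pos). assert (HP := PP_pos).
    apply Rlt_le, Rdiv_lt_0_compat. lra. nra. }
  nra.
Qed.

Lemma an_le0 z : VI_solution f B z -> forall n, an z n <= an z 0.
Proof. intros Hz n. induction n. lra. eapply Rle_trans. apply an_decr. auto. auto. Qed.

Lemma an_cv z : VI_solution f B z -> exists l, Un_cv (an z) l.
Proof.
  intros Hz. destruct (decreasing_cv (an z)) as [l Hl].
  - intro n. apply an_decr. auto.
  - exists 0. intros r [i ->]. unfold opp_seq. assert (H := an_nonneg z i). lra.
  - eauto.
Qed.

Lemma D_bound z : VI_solution f B z -> forall n,
  inner (hsub (x n) (p n)) (hsub (x n) (p n)) <= mu * PP / eps * (an z n - an z (S n)).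
Proof.
  intros Hz n. assert (H := fejer n z Hz). assert (Hm := mu_pos). assert (HP := PP_pos).
  assert (Hep : 0 < eps) by lra.
  set (D2 := inner (hsub (x n) (p n)) (hsub (x n) (p n))) in *.
  replace D2 with (mu * PP / eps * (eps / (mu * PP) * D2)) by (field; repeat split; lra).
  apply Rmult_le_compat_l. apply Rlt_le, Rdiv_lt_0_compat. nra. lra. lra.
Qed.

Lemma norm_of_sq (v : K) M : inner v v <= M -> hnorm v <= sqrt M.
Proof. intros H. unfold hnorm. apply sqrt_le_1_alt. auto. Qed.

Lemma D_cv0 : Un_cv (fun n => hnorm (hsub (x n) (p n))) 0.
Proof.
  destruct Hsol as [zs Hz]. destruct (an_cv zs Hz) as [l Hl].
  assert (H0 : Un_cv (fun n => inner (hsub (x n) (p n)) (hsub (x n) (p n))) 0).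
  { apply squeeze0 with (d := fun n => mu * PP / eps * (an zs n - an zs (S n))).
    intro n. rewrite Rabs_right by (apply Rle_ge, inner_pos). apply D_bound. auto.
    replace 0 with (mu * PP / eps * (l - l)) by ring. apply (CV_mult (fun _ => mu * PP / eps)). apply cv_const.
    apply CV_minus. auto. assert (H := CV_shift' (an zs) 1 l Hl).
    apply (cv_ext (fun n => an zs (n + 1))). intro. f_equal. lia. auto. }
  intros e He. destruct (H0 (e * e)) as [N HN]. nra. exists N. intros n Hn. specialize (HN n Hn).
  unfold R_dist in *. rewrite Rminus_0_r in *. rewrite Rabs_right in * by (apply Rle_ge; try apply inner_pos; apply hnorm_pos).
  apply sq_lt_sqrt. apply inner_pos. lra. auto.
Qed.

Lemma x_bounded : exists C, forall n, hnorm (x n) <= C /\ hnorm (p n) <= C.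
Proof.
  destruct Hsol as [zs Hz]. assert (Hm := mu_pos). assert (HP := PP_pos). assert (Hep : 0 < eps) by lra.
  set (M1 := mu * PP * an zs 0). set (M2 := mu * PP / eps * an zs 0).
  exists (hnorm zs + sqrt M1 + sqrt M2). intro n.
  assert (Hx1 : hnorm (hsub (x n) zs) <= sqrt M1).
  { apply norm_of_sq. eapply Rle_trans. apply Wn_lower.
    assert (E : inner (Wn n (hsub (x n) zs)) (hsub (x n) zs) = pi_ n * an zs n).
    { unfold an. field. assert (H := pi_ge1 n). lra. }
    rewrite E. unfold M1. assert (H1 := pi_le n). assert (H2 := an_le0 zs Hz n). assert (H3 := an_nonneg zs n).
    assert (H4 := pi_ge1 n). rewrite Rmult_assoc. apply Rmult_le_compat_l. lra. nra. }
  assert (Hx2 : hnorm (hsub (x n) (p n)) <= sqrt M2).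
  { apply norm_of_sq. eapply Rle_trans. apply (D_bound zs Hz). unfold M2.
    apply Rmult_le_compat_l. apply Rlt_le, Rdiv_lt_0_compat. nra. lra.
    assert (H2 := an_le0 zs Hz n). assert (H3 := an_nonneg zs (S n)). lra. }
  assert (Hs1 := sqrt_pos M1). assert (Hs2 := sqrt_pos M2).
  assert (Ex : x n = hadd K (hsub (x n) zs) zs) by vec_eq.
  assert (Hxn : hnorm (x n) <= hnorm zs + sqrt M1).
  { rewrite Ex. eapply Rle_trans. apply tri. lra. }
  split. lra.
  assert (Ep : p n = hadd K (x n) (hscal K (-1) (hsub (x n) (p n)))) by vec_eq.
  rewrite Ep. eapply Rle_trans. apply tri. rewrite hnorm_scal. rewrite Rabs_left by lra. lra.
Qed.
Lemma weak_cv_ext (u v : nat -> K) l : (forall k, u k = v k) -> weak_cv u l -> weak_cv v l.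
Proof. intros E H z. apply (cv_ext (fun k => inner (u k) z)). intro. rewrite E. auto. apply H. Qed.

Lemma level_convex (c : R) : hconvex_set (fun w : K => ele (f w) (Fin c)).
Proof.
  intros a b t Ht Ha' Hb'. destruct (Req_dec t 0) as [->|H0].
  { replace (hadd K (hscal K 0 a) (hscal K (1 - 0) b)) with b by vec_eq. auto. }
  destruct (Req_dec t 1) as [->|H1].
  { replace (hadd K (hscal K 1 a) (hscal K (1 - 1) b)) with a by vec_eq. auto. }
  assert (Hc := Hconv a b t ltac:(lra)).
  destruct (f a) as [fa|]; [|contradiction]. destruct (f b) as [fb|]; [|contradiction].
  simpl in *. destruct (f (hadd K (hscal K t a) (hscal K (1 - t) b))) as [v|]; simpl in *; [|contradiction].
  nra.
Qed.

Lemma level_closed (c : R) : hclosed_set (fun w : K => ele (f w) (Fin c)).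
Proof. intros u l Hu Hl. eapply Hlsc; eauto. Qed.

Lemma minty xt v : f xt = Fin v -> (forall z fz, f z = Fin fz -> v <= fz + inner (B z) (hsub z xt)) ->
  VI_solution f B xt.
Proof.
  intros Hv Hm y'. rewrite Hv. destruct (f y') as [fy|] eqn:Ey; simpl; auto.
  cut (inner (hsub xt y') (B xt) + v - fy <= 0). lra.
  apply le_small with (c := beta * inner (hsub y' xt) (hsub y' xt)). intros t Ht.
  set (zt := hadd K (hscal K t y') (hscal K (1 - t) xt)).
  assert (Hc := Hconv y' xt t Ht). rewrite Ey, Hv in Hc. fold zt in Hc. simpl in Hc.
  destruct (f zt) as [fzt|] eqn:Ezt; [|contradiction]. simpl in Hc.
  assert (H := Hm zt fzt Ezt).
  assert (E1 : hsub zt xt = hscal K t (hsub y' xt)) by (unfold zt; vec_eq).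
  rewrite E1, inner_scalr in H.
  assert (H2 : v <= fy + inner (B zt) (hsub y' xt)).
  { apply (Rmult_le_reg_l t). lra. nra. }
  assert (H3 : inner (hsub (B zt) (B xt)) (hsub y' xt) <= beta * t * inner (hsub y' xt) (hsub y' xt)).
  { eapply Rle_trans. apply cs_le. assert (Hl := Hlip zt xt). rewrite E1, hnorm_scal, Rabs_right in Hl by lra.
    rewrite <- hnorm_sq. assert (HH1 := hnorm_pos (hsub y' xt)). assert (HH2 := hnorm_pos (hsub (B zt) (B xt))).
    nra. }
  rewrite inner_subl in H3. assert (E2 : inner (hsub xt y') (B xt) = - inner (B xt) (hsub y' xt)).
  { rewrite inner_sym. replace (hsub xt y') with (hscal K (-1) (hsub y' xt)) by vec_eq. rewrite inner_scalr. ring. }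
  rewrite E2. nra.
Qed.
Definition delta (n : nat) (z : K) : R :=
  - / gamma n * inner (Wn n (hsub (x n) (p n))) (hsub z (p n)) + inner (hsub (B (x n)) (B (p n))) (hsub z (p n)).

Lemma key_ineq n z fz fp : f z = Fin fz -> f (p n) = Fin fp ->
  fp <= fz + inner (B z) (hsub z (p n)) + delta n z.
Proof.
  intros Hfz Hfp. assert (Hpi := p_ineq n fp Hfp z fz Hfz). assert (Hg := gam_pos n).
  assert (HL := Wn_lin n). assert (Hmo := Hmon z (p n)).
  assert (Eyp : hsub (y n) (p n) = hsub (hsub (x n) (p n)) (hscal K (gamma n) (U n (B (x n))))) by (rewrite Hy; vec_eq).
  rewrite Eyp, (lin_sub _ HL), (lin_scal _ HL), WUn in Hpi. autorewrite with inner in Hpi.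
  unfold delta. autorewrite with inner. autorewrite with inner in Hmo.
  assert (S1 := inner_sym (B z) z). assert (S2 := inner_sym (B z) (p n)).
  assert (S3 := inner_sym (B (p n)) z). assert (S4 := inner_sym (B (p n)) (p n)).
  set (w1 := inner (Wn n (hsub (x n) (p n))) z) in *. set (w2 := inner (Wn n (hsub (x n) (p n))) (p n)) in *.
  set (b1 := inner (B (x n)) z) in *. set (b2 := inner (B (x n)) (p n)) in *.
  assert (E : / gamma n * (w1 - gamma n * b1 - (w2 - gamma n * b2)) = / gamma n * (w1 - w2) - (b1 - b2)) by (field; lra).
  rewrite E in Hpi. lra.
Qed.

Lemma delta_bound C : (forall n, hnorm (p n) <= C) -> forall n z,
  Rabs (delta n z) <= (/ (eps * alpha) + beta) * (hnorm z + C) * hnorm (hsub (x n) (p n)).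
Proof.
  intros HC n z. unfold delta. set (D := hsub (x n) (p n)). set (v := hsub z (p n)).
  assert (Hv : hnorm v <= hnorm z + C).
  { unfold v. replace (hsub z (p n)) with (hadd K z (hscal K (-1) (p n))) by vec_eq.
    eapply Rle_trans. apply tri. rewrite hnorm_scal, Rabs_left by lra. specialize (HC n). lra. }
  assert (Hg := Hgam n). assert (Hg0 := gam_pos n). assert (Hep : 0 < eps) by lra.
  assert (HW := Wn_norm n D). assert (HD := hnorm_pos D). assert (Hv0 := hnorm_pos v).
  assert (H1 : Rabs (inner (Wn n D) v) <= hnorm D / alpha * hnorm v).
  { eapply Rle_trans. apply cs. apply Rmult_le_compat_r. auto. apply (Rmult_le_reg_l alpha). auto.
    replace (alpha * (hnorm D / alpha)) with (hnorm D) by (field; lra). auto. }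
  assert (H2 : Rabs (inner (hsub (B (x n)) (B (p n))) v) <= beta * hnorm D * hnorm v).
  { eapply Rle_trans. apply cs. apply Rmult_le_compat_r. auto. apply Hlip. }
  assert (H3 : / gamma n <= / eps) by (apply Rinv_le_contravar; lra).
  eapply Rle_trans. apply Rabs_triang. rewrite Rabs_mult, Rabs_Ropp, Rabs_right.
  2:{ left. apply Rinv_0_lt_compat. auto. }
  assert (H4 : / gamma n * Rabs (inner (Wn n D) v) <= / eps * (hnorm D / alpha * hnorm v)).
  { apply Rmult_le_compat. left; apply Rinv_0_lt_compat; auto. apply Rabs_pos. auto. auto. }
  replace (/ eps * (hnorm D / alpha * hnorm v)) with (/ (eps * alpha) * hnorm D * hnorm v) in H4 by (field; lra).
  assert (H5 : (/ (eps * alpha) + beta) * hnorm v * hnorm D <= (/ (eps * alpha) + beta) * (hnorm z + C) * hnorm D).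
  { apply Rmult_le_compat_r. auto. apply Rmult_le_compat_l. assert (0 < / (eps * alpha)) by (apply Rinv_0_lt_compat; nra). lra. auto. }
  nra.
Qed.

Lemma cl_S (ρ : nat -> nat) xt : (forall k, (k <= ρ k)%nat) -> weak_cv (fun k => x (ρ k)) xt -> VI_solution f B xt.
Proof.
  intros Hρ Hw. destruct x_bounded as [C HC].
  assert (Hpw : weak_cv (fun k => p (ρ k)) xt).
  { apply (weak_cv_ext (fun k => hadd K (x (ρ k)) (hscal K (-1) (hsub (x (ρ k)) (p (ρ k)))))).
    intro k. vec_eq. apply weak_pert. auto.
    apply (cv_ext (fun k => hnorm (hsub (x (ρ k)) (p (ρ k))))). intro k. rewrite hnorm_scal, Rabs_left by lra. ring.
    apply (cv_sub ρ (fun n => hnorm (hsub (x n) (p n)))). auto. apply D_cv0. }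
  assert (Hlevel : forall z fz, f z = Fin fz -> forall c', fz + inner (B z) (hsub z xt) < c' -> ele (f xt) (Fin c')).
  { intros z fz Hfz c' Hc'.
    set (cz := fz + inner (B z) (hsub z xt)).
    assert (Hck : Un_cv (fun k => fz + inner (B z) (hsub z (p (ρ k))) + delta (ρ k) z) cz).
    { unfold cz. replace (fz + inner (B z) (hsub z xt)) with (fz + inner (B z) (hsub z xt) + 0) by ring.
      apply CV_plus. apply CV_plus. apply cv_const.
      apply (cv_ext (fun k => inner (B z) z - inner (p (ρ k)) (B z))). intro k. rewrite inner_subr, (inner_sym (B z) (p (ρ k))). auto.
      rewrite inner_subr. rewrite (inner_sym (B z) xt). apply CV_minus. apply cv_const. apply Hpw.
      apply squeeze0 with (d := fun k => (/ (eps * alpha) + beta) * (hnorm z + C) * hnorm (hsub (x (ρ k)) (p (ρ k)))).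
      intro k. apply delta_bound. intro n. apply HC.
      replace 0 with ((/ (eps * alpha) + beta) * (hnorm z + C) * 0) by ring.
      apply (CV_mult (fun _ => (/ (eps * alpha) + beta) * (hnorm z + C))). apply cv_const.
      apply (cv_sub ρ (fun n => hnorm (hsub (x n) (p n)))). auto. apply D_cv0. }
    destruct (Hck (c' - cz)) as [K0 HK0]. unfold cz in *. lra.
    apply (weak_closed (fun w : K => ele (f w) (Fin c')) (p (ρ K0))) with (u := fun k => p (ρ (k + K0)%nat)).
    - destruct (fp_fin (ρ K0)) as [fp Hfp]. rewrite Hfp. simpl.
      assert (H := key_ineq (ρ K0) z fz fp Hfz Hfp). specialize (HK0 K0 (le_n _)).
      unfold R_dist in HK0. apply Rabs_def2 in HK0. lra.
    - apply level_convex.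
    - apply level_closed.
    - intro k. simpl. destruct (fp_fin (ρ (k + K0)%nat)) as [fp Hfp]. rewrite Hfp. simpl.
      assert (H := key_ineq (ρ (k + K0)%nat) z fz fp Hfz Hfp). specialize (HK0 (k + K0)%nat ltac:(lia)).
      unfold R_dist in HK0. apply Rabs_def2 in HK0. lra.
    - apply (weak_sub (fun k => (k + K0)%nat) (fun k => p (ρ k))). intro; lia. auto. }
  destruct Hprop as [z0 Hz0]. destruct (f z0) as [fz0|] eqn:Ez0; [|congruence].
  assert (H0 := Hlevel z0 fz0 Ez0 _ (Rlt_plus_1 _)).
  destruct (f xt) as [v|] eqn:Ev; [|contradiction].
  apply (minty xt v Ev). intros z fz Hfz.
  apply Rnot_lt_le. intro Hlt.
  assert (H := Hlevel z fz Hfz ((fz + inner (B z) (hsub z xt) + v) / 2) ltac:(lra)).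
  simpl in H. lra.
Qed.
Definition Vn (n : nat) (v : K) : K := hscal K (/ pi_ n) (Wn n v).

Lemma pi_pos n : 0 < pi_ n.
Proof. assert (H := pi_ge1 n). lra. Qed.

Lemma Vn_lin n : is_linear (Vn n).
Proof. intros a u v. unfold Vn. rewrite (Wn_lin n). vec_eq. Qed.

Lemma Vn_sa n : self_adjoint (Vn n).
Proof. intros u v. unfold Vn. rewrite inner_scall, inner_scalr, (Wn_sa n). auto. Qed.

Definition sn (d : K) (n : nat) : R := inner (Vn n d) d.

Lemma sn_eq d n : sn d n = inner (Wn n d) d / pi_ n.
Proof. unfold sn, Vn. rewrite inner_scall. unfold Rdiv. ring. Qed.

Lemma sn_nonneg d n : 0 <= sn d n.
Proof. rewrite sn_eq. apply Rmult_le_pos. apply Wn_pos. left. apply Rinv_0_lt_compat, pi_pos. Qed.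

Lemma sn_lower d n : inner d d / (mu * PP) <= sn d n.
Proof.
  rewrite sn_eq. assert (H := Wn_lower n d). assert (Hm := mu_pos). assert (HP := pi_le n).
  assert (H1 := pi_pos n). assert (H2 := inner_pos d).
  apply (Rmult_le_reg_r (mu * PP * pi_ n)). apply Rmult_lt_0_compat; [apply Rmult_lt_0_compat|]; lra.
  replace (inner d d / (mu * PP) * (mu * PP * pi_ n)) with (inner d d * pi_ n) by (field; split; lra).
  replace (inner (Wn n d) d / pi_ n * (mu * PP * pi_ n)) with (mu * inner (Wn n d) d * PP) by (field; lra).
  assert (H3 := Wn_pos n d). nra.
Qed.

Lemma sn_decr d n : sn d (S n) <= sn d n.
Proof.
  rewrite !sn_eq. change (pi_ (S n)) with (pi_ n * (1 + eta n)).
  assert (H := Wn_loewner n d). assert (He := Heta n). assert (Hp0 := pi_pos n).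
  replace (inner (Wn (S n) d) d / (pi_ n * (1 + eta n))) with ((inner (Wn (S n) d) d / (1 + eta n)) / pi_ n) by (field; lra).
  unfold Rdiv at 1 3. apply Rmult_le_compat_r. left. apply Rinv_0_lt_compat. lra.
  apply (Rmult_le_reg_r (1 + eta n)). lra. replace (inner (Wn (S n) d) d / (1 + eta n) * (1 + eta n)) with (inner (Wn (S n) d) d) by (field; lra). nra.
Qed.

Lemma sn_mono d n m : (n <= m)%nat -> sn d m <= sn d n.
Proof. induction 1. lra. eapply Rle_trans. apply sn_decr. auto. Qed.

Lemma sn_cv d : exists l, Un_cv (sn d) l.
Proof.
  destruct (decreasing_cv (sn d)) as [l Hl]. intro n. apply sn_decr.
  exists 0. intros r [i ->]. unfold opp_seq. assert (H := sn_nonneg d i). lra. eauto.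
Qed.

Lemma Vn_norm n v : alpha * hnorm (Vn n v) <= hnorm v.
Proof.
  unfold Vn. rewrite hnorm_scal, Rabs_right. 2:{ left. apply Rinv_0_lt_compat, pi_pos. }
  assert (H := Wn_norm n v). assert (H1 := pi_ge1 n). assert (H2 : / pi_ n <= 1).
  { rewrite <- Rinv_1. apply Rinv_le_contravar; lra. }
  assert (H3 := hnorm_pos (Wn n v)). assert (0 < / pi_ n) by (apply Rinv_0_lt_compat, pi_pos). assert (0 <= alpha * hnorm (Wn n v)) by nra. nra.
Qed.

Lemma Vn_cauchy d n m : (n <= m)%nat ->
  alpha * inner (hsub (Vn n d) (Vn m d)) (hsub (Vn n d) (Vn m d)) <= 2 * (sn d n - sn d m).
Proof.
  intros Hnm. set (A := fun v => hsub (Vn n v) (Vn m v)).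
  assert (AL : is_linear A). { intros a u v. unfold A. rewrite (Vn_lin n), (Vn_lin m). vec_eq. }
  assert (AS : self_adjoint A). { intros u v. unfold A. autorewrite with inner. rewrite (Vn_sa n), (Vn_sa m). auto. }
  assert (AP : forall v, 0 <= inner (A v) v).
  { intro v. unfold A. rewrite inner_subl. assert (H := sn_mono v n m Hnm). unfold sn in H. lra. }
  assert (Anorm : forall v, alpha * hnorm (A v) <= 2 * hnorm v).
  { intro v. unfold A. unfold hsub. eapply Rle_trans. apply Rmult_le_compat_l. lra. apply tri.
    replace (hnorm (hopp K (Vn m v))) with (hnorm (Vn m v)).
    assert (H1 := Vn_norm n v). assert (H2 := Vn_norm m v). lra.
    replace (hopp K (Vn m v)) with (hscal K (-1) (Vn m v)) by vec_eq. rewrite hnorm_scal, Rabs_left by lra. ring. }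
  assert (H := gen_cs A AL AS AP d (A d)).
  set (X := inner (A d) (A d)) in *.
  assert (HX : alpha * inner (A (A d)) (A d) <= 2 * X).
  { eapply Rle_trans. apply Rmult_le_compat_l. lra. apply cs_le. unfold X. rewrite <- hnorm_sq.
    assert (H1 := Anorm (A d)). assert (H2 := hnorm_pos (A d)). nra. }
  assert (E : inner (A d) d = sn d n - sn d m) by (unfold A, sn; rewrite inner_subl; auto).
  change (alpha * X <= 2 * (sn d n - sn d m)). rewrite <- E.
  assert (HX0 : 0 <= X) by apply inner_pos. assert (HAd := AP d).
  destruct HX0 as [HX0|HX0].
  - apply (Rmult_le_reg_r X). auto. nra.
  - rewrite <- HX0. nra.
Qed.

Lemma Vn_cv d : exists vd, strong_cv (fun n => Vn n d) vd.
Proof.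
  destruct (sn_cv d) as [l Hl].
  destruct (hcomplete K (fun n => Vn n d)) as [vd Hvd].
  - intros e He. destruct (CV_Cauchy (sn d) (exist _ l Hl) (alpha * (e * e) / 2)) as [N HN].
    { apply Rdiv_lt_0_compat. apply Rmult_lt_0_compat. lra. nra. lra. }
    exists N. intros n m Hn Hm. change (hnorm (hsub (Vn n d) (Vn m d)) < e).
    apply sq_lt_sqrt. apply inner_pos. auto.
    specialize (HN n m Hn Hm). unfold R_dist in HN.
    destruct (le_dec n m) as [Hle|Hle].
    + assert (H := Vn_cauchy d n m Hle). assert (H1 := sn_mono d n m Hle).
      rewrite Rabs_right in HN by lra. apply (Rmult_lt_reg_l alpha). auto. lra.
    + assert (Hle' : (m <= n)%nat) by lia. assert (H := Vn_cauchy d m n Hle'). assert (H1 := sn_mono d m n Hle').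
      rewrite Rabs_left1 in HN by lra.
      replace (hsub (Vn n d) (Vn m d)) with (hscal K (-1) (hsub (Vn m d) (Vn n d))) by vec_eq.
      rewrite inner_scall, inner_scalr. apply (Rmult_lt_reg_l alpha). auto. lra.
  - exists vd. apply strong_cv_iff. intros e He. destruct (Hvd e He) as [N HN]. exists N. auto.
Qed.

Lemma an_expand z n : an z n = inner (Vn n (x n)) (x n) - 2 * inner (x n) (Vn n z) + sn z n.
Proof.
  assert (E : an z n = inner (Vn n (hsub (x n) z)) (hsub (x n) z)).
  { unfold an, Vn. rewrite inner_scall. unfold Rdiv. ring. }
  rewrite E, (lin_sub _ (Vn_lin n)). unfold sn. autorewrite with inner.
  rewrite (Vn_sa n (x n) z), (inner_sym (Vn n z) (x n)). ring.
Qed.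

Lemma cl_unique (ρ1 ρ2 : nat -> nat) x1 x2 : (forall k, (k <= ρ1 k)%nat) -> (forall k, (k <= ρ2 k)%nat) ->
  weak_cv (fun k => x (ρ1 k)) x1 -> weak_cv (fun k => x (ρ2 k)) x2 -> x1 = x2.
Proof.
  intros H1 H2 W1 W2.
  assert (S1 := cl_S ρ1 x1 H1 W1). assert (S2 := cl_S ρ2 x2 H2 W2).
  destruct (an_cv x1 S1) as [a1 Ha1]. destruct (an_cv x2 S2) as [a2 Ha2].
  destruct (sn_cv x1) as [s1 Hs1]. destruct (sn_cv x2) as [s2 Hs2].
  set (d := hsub x1 x2). destruct (Vn_cv d) as [vd Hvd].
  destruct x_bounded as [C HC].
  set (t := fun n => inner (x n) (Vn n d)).
  assert (Ht : Un_cv t ((a2 - a1 + s1 - s2) / 2)).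
  { apply (cv_ext (fun n => (an x2 n - an x1 n + sn x1 n - sn x2 n) / 2)).
    intro n. rewrite !an_expand. unfold t, d. rewrite (lin_sub _ (Vn_lin n)), inner_subr. field.
    unfold Rdiv. apply (CV_mult _ (fun _ => / 2)). apply CV_minus. apply CV_plus. apply CV_minus. auto. auto. auto. auto. apply cv_const. }
  assert (Hlim : forall (ρ : nat -> nat) xl, (forall k, (k <= ρ k)%nat) -> weak_cv (fun k => x (ρ k)) xl ->
     (a2 - a1 + s1 - s2) / 2 = inner xl vd).
  { intros ρ xl Hρ Hw. eapply cv_unique. apply (cv_sub ρ t _ Hρ Ht).
    apply (cv_ext (fun k => inner (x (ρ k)) vd + inner (x (ρ k)) (hsub (Vn (ρ k) d) vd))).
    intro k. unfold t. rewrite inner_subr. ring.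
    replace (inner xl vd) with (inner xl vd + 0) by ring. apply CV_plus. apply Hw.
    apply squeeze0 with (d := fun k => C * hnorm (hsub (Vn (ρ k) d) vd)).
    intro k. eapply Rle_trans. apply cs. apply Rmult_le_compat_r. apply hnorm_pos. apply HC.
    replace 0 with (C * 0) by ring. apply (CV_mult (fun _ => C)). apply cv_const.
    apply (cv_sub ρ (fun n => hnorm (hsub (Vn n d) vd))). auto. apply Hvd. }
  assert (E1 := Hlim ρ1 x1 H1 W1). assert (E2 := Hlim ρ2 x2 H2 W2).
  assert (Hd0 : inner vd d = 0). { unfold d. rewrite inner_subr, !(inner_sym vd). lra. }
  assert (Hsd : Un_cv (sn d) (inner vd d)).
  { unfold sn. apply (strong_weak _ _ Hvd d). }
  assert (Hlow : inner d d / (mu * PP) <= inner vd d) by (apply cv_ge_const with (a := sn d); [intro; apply sn_lower | auto]).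
  rewrite Hd0 in Hlow. assert (Hm := mu_pos). assert (HP := PP_pos). assert (HDD := inner_pos d).
  assert (inner d d <= 0).
  { apply (Rmult_le_reg_r (/ (mu * PP))). apply Rinv_0_lt_compat. nra. rewrite Rmult_0_l. auto. }
  apply sub_zero_eq, inner_zero_eq. fold d. lra.
Qed.

Theorem main_result : exists xb, VI_solution f B xb /\ weak_cv x xb.
Proof.
  destruct x_bounded as [C HC].
  destruct (weak_compact x C (fun n => proj1 (HC n))) as [ρ [xb [Hρ Hw]]].
  exists xb. split. apply (cl_S ρ xb Hρ Hw).
  intro z. apply NNPP. intro Hn.
  assert (Hex : exists e, e > 0 /\ forall N, exists n, (N <= n)%nat /\ R_dist (inner (x n) z) (inner xb z) >= e).
  { apply NNPP. intro Hne. apply Hn. intros e He. apply NNPP. intro HN. apply Hne. exists e. split. auto.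
    intro N. apply NNPP. intro HN2. apply HN. exists N. intros n Hnn. apply Rnot_ge_lt. intro Hge. apply HN2.
    exists n. split. lia. auto. }
  destruct Hex as [e [He Hs]]. destruct (choice_nat _ Hs) as [σ Hσ].
  destruct (weak_compact (fun k => x (σ k)) C (fun n => proj1 (HC (σ n)))) as [φ [x' [Hφ Hw']]].
  assert (Hσφ : forall k, (k <= σ (φ k))%nat). { intro k. specialize (Hφ k). specialize (Hσ (φ k)). lia. }
  assert (E := cl_unique ρ (fun k => σ (φ k)) xb x' Hρ Hσφ Hw Hw'). subst x'.
  destruct (Hw' z e He) as [N HN]. specialize (HN N (le_n _)). specialize (Hσ (φ N)). lra.
Qed.

End Main.

Theorem mainTheorem2
  (K : HilbertSpace) (f : K -> ereal) (alpha beta : R) (B : K -> K)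
  (eta : nat -> R) (U : nat -> K -> K) (mu : R) (eps : R)
  (gamma : nat -> R) (x y p q : nat -> K) :
  proper f -> lsc f -> convex f ->
  0 < alpha -> 0 < beta ->
  monotone B -> lipschitz beta B ->
  (forall n, 0 <= eta n) -> (exists l, infinite_sum eta l) ->
  (forall n, P_alpha alpha (U n)) ->
  is_lub (fun r => exists n, is_opnorm (U n) r) mu ->
  (forall n, loewner_ge (fun z => hscal K (1 + eta n) (U (S n) z)) (U n)) ->
  0 < eps < Rmin 1 (1 / (mu * beta + 1)) ->
  (forall n, eps <= gamma n <= (1 - eps) / (beta * mu)) ->
  (exists xb, VI_solution f B xb) ->
  (forall n, y n = hsub (x n) (hscal K (gamma n) (U n (B (x n))))) ->
  (forall n, forall z : K,
      ele (eaddr (1 / (2 * gamma n) * (Mnorm (inv_op (U n)) (hsub (p n) (y n))) ^ 2) (f (p n)))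
          (eaddr (1 / (2 * gamma n) * (Mnorm (inv_op (U n)) (hsub z (y n))) ^ 2) (f z))) ->
  (forall n, q n = hsub (p n) (hscal K (gamma n) (U n (B (p n))))) ->
  (forall n, x (S n) = hadd K (hsub (x n) (y n)) (q n)) ->
  exists xb, VI_solution f B xb /\ weak_cv x xb.
Proof.
  intros. apply (main_result K f alpha beta B eta U mu eps gamma x y p q); assumption.
Qed.
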